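(* Let $r_1,r_2$ be $2\pi$-periodic, bounded and piecewise $C^1$, let $\nu>0$, $\mu>0$, and let $(x_1(t),x_2(t))$ be the solution of $$\frac{dx_1}{dt}=r_1(\nu t)x_1+\mu(x_2-x_1),\qquad \frac{dx_2}{dt}=r_2(\nu t)x_2+\mu(x_1-x_2)$$ with $x_1(0)>0$, $x_2(0)>0$. Then the limit $\Delta(\nu,\mu)=\lim_{t\to\infty}\frac{\ln(x_1(t)x_2(t))}{t}$ exists, is independent of the positive initial condition, and $$\Delta(\nu,\mu)=\frac{1}{2\pi}\int_0^{2\pi}\Big(r_1(s)+r_2(s)+\sqrt{m^2+y_m(s)^2}-m\Big)\,ds,\qquad m=2\mu,$$ where $y_m$ is the unique $2\pi$-periodic solution of $$\frac{dy}{dt}=\frac{1}{\nu}\sqrt{m^2+y^2}\,\big(r_1(t)-r_2(t)-y\big).$$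
   Context: Piecewise $C^1$: there is a discrete sequence of points outside of which the function is the restriction of a $C^1$ function with bounded derivative. *)

(* Defs.v *)
From Stdlib Require Import Reals List.
From Coquelicot Require Import Coquelicot.
Open Scope R_scope.

(* A set of reals is discrete in the sense of "a discrete sequence of points":
   every bounded interval contains only finitely many of its points. *)
Definition locally_finite (S : R -> Prop) : Prop :=
  forall a b : R, exists l : list R, forall x, a <= x <= b -> S x -> In x l.

Definition C1_bounded_deriv (g : R -> R) : Prop :=
  (forall x, ex_derive g x /\ continuous (Derive g) x) /\
  (exists M, forall x, Rabs (Derive g x) <= M).

Definition piecewise_C1 (f : R -> R) : Prop :=
  exists S : R -> Prop, locally_finite S /\
    forall a b : R, a < b -> (forall x, a < x < b -> ~ S x) ->
      exists g, C1_bounded_deriv g /\ forall x, a < x < b -> f x = g x.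

Definition periodic_2pi (f : R -> R) : Prop := forall t, f (t + 2 * PI) = f t.

Definition bounded_fun (f : R -> R) : Prop := exists M, forall t, Rabs (f t) <= M.

(* (x1,x2) solves the system on [0,+oo) (Carathéodory / integral form):
   x_i(t) = x_i(0) + \int_0^t RHS_i(s) ds for all t >= 0. *)
Definition is_solution (r1 r2 : R -> R) (nu mu : R) (x1 x2 : R -> R) : Prop :=
  forall t, 0 <= t ->
    is_RInt (fun s => r1 (nu * s) * x1 s + mu * (x2 s - x1 s)) 0 t (x1 t - x1 0) /\
    is_RInt (fun s => r2 (nu * s) * x2 s + mu * (x1 s - x2 s)) 0 t (x2 t - x2 0).

Definition is_y_solution (r1 r2 : R -> R) (nu m : R) (y : R -> R) : Prop :=
  forall t,
    is_RInt (fun s => / nu * sqrt (m ^ 2 + y s ^ 2) * (r1 s - r2 s - y s)) 0 t (y t - y 0).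

(* Main.v *)
Require Import Defs.
From Stdlib Require Import Reals Lra Lia List ZArith.
From Coquelicot Require Import Coquelicot.
Open Scope R_scope.

Lemma ballR (x e y : R) : ball x e y <-> Rabs (y - x) < e.
Proof. reflexivity. Qed.

Lemma locR (x : R) (P : R -> Prop) :
  (exists d, 0 < d /\ forall y, Rabs (y - x) < d -> P y) -> locally x P.
Proof. intros [d [Hd H]]. exists (mkposreal d Hd). intros y Hy. apply H. exact Hy. Qed.

Lemma lip_cont (f : R -> R) (M : R) x :
  (forall s t, Rabs (f s - f t) <= M * Rabs (s - t)) -> continuous f x.
Proof.
  intros H. apply filterlim_locally. intros eps.
  apply locR. exists (eps / (Rabs M + 1)). split.
  { apply Rdiv_lt_0_compat. apply cond_pos. pose proof (Rabs_pos M); lra. }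
  intros y Hy. apply ballR.
  eapply Rle_lt_trans. apply H.
  pose proof (Rabs_pos M). pose proof (Rabs_pos (y - x)). pose proof (cond_pos eps).
  apply Rle_lt_trans with ((Rabs M + 1) * Rabs (y - x)).
  { assert (M <= Rabs M) by apply RRle_abs. nra. }
  apply Rmult_lt_reg_r with (/ (Rabs M + 1)). apply Rinv_0_lt_compat; lra.
  rewrite (Rmult_comm (Rabs M + 1)), Rmult_assoc, Rinv_r by lra. lra.
Qed.

Definition clamp (a b s : R) := Rmax a (Rmin b s).

Lemma clamp_in a b s : a <= s <= b -> clamp a b s = s.
Proof. intros. unfold clamp, Rmax, Rmin. repeat destruct Rle_dec; lra. Qed.

Lemma clamp_range a b s : a <= b -> a <= clamp a b s <= b.
Proof. intros. unfold clamp, Rmax, Rmin. repeat destruct Rle_dec; lra. Qed.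

Lemma clamp_lip a b s t : a <= b -> Rabs (clamp a b s - clamp a b t) <= 1 * Rabs (s - t).
Proof. intros. unfold clamp, Rmax, Rmin. repeat destruct Rle_dec; unfold Rabs; repeat destruct Rcase_abs; lra. Qed.

Lemma clamp_cont a b x : a <= b -> continuous (clamp a b) x.
Proof. intros. apply lip_cont with 1. intros; apply clamp_lip; auto. Qed.

Definition cw (a b : R) (F : R -> R) := forall t, continuous (fun s => F (clamp a b s)) t.

Lemma cw_cont a b F : (forall t, continuous F t) -> a <= b -> cw a b F.
Proof. intros H Hab t. apply continuous_comp. apply clamp_cont; auto. apply H. Qed.

Lemma cw_sub a b a' b' F : cw a b F -> a <= a' -> a' <= b' -> b' <= b -> cw a' b' F.
Proof.
  intros H H1 H2 H3 t.
  apply continuous_ext with (fun s => F (clamp a b (clamp a' b' s))).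
  { intros s. f_equal. apply clamp_in. pose proof (clamp_range a' b' s H2). lra. }
  apply continuous_comp with (f := clamp a' b') (g := fun s => F (clamp a b s)).
  apply clamp_cont; auto. apply H.
Qed.

Lemma cw_comp a b F (phi : R -> R) : cw a b F -> (forall x, continuous phi x) -> cw a b (fun s => phi (F s)).
Proof. intros H Hp t. apply continuous_comp with (f := fun s => F (clamp a b s)). apply H. apply Hp. Qed.

Lemma cw_plus a b F G : cw a b F -> cw a b G -> cw a b (fun s => F s + G s).
Proof. intros H1 H2 t. apply (continuous_plus (fun s => F (clamp a b s)) (fun s => G (clamp a b s))); auto. Qed.

Lemma cw_mult a b F G : cw a b F -> cw a b G -> cw a b (fun s => F s * G s).
Proof. intros H1 H2 t. apply (continuous_mult (fun s => F (clamp a b s)) (fun s => G (clamp a b s))); auto. Qed.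

Lemma cw_const a b k : cw a b (fun _ => k).
Proof. intros t. apply continuous_const. Qed.

Lemma cw_id a b : a <= b -> cw a b (fun s => s).
Proof. intros H t. apply clamp_cont; auto. Qed.

Definition PC (l : list R) (a b : R) (f : R -> R) :=
  forall p q, a <= p -> p < q -> q <= b -> (forall y, In y l -> ~ (p < y < q)) ->
    exists g : R -> R, (forall x, continuous g x) /\ (forall x, p < x < q -> f x = g x).

Lemma PC_mono l l' a b a' b' f : PC l a b f -> incl l l' -> a <= a' -> b' <= b -> PC l' a' b' f.
Proof.
  intros H Hi H1 H2 p q Hp Hpq Hq Hy. apply H; try lra.
  intros y Hy'. apply Hy. apply Hi. auto.
Qed.

Lemma PC_cw a b F : cw a b F -> PC nil a b F.
Proof.
  intros H p q Hp Hpq Hq _. exists (fun s => F (clamp a b s)). split. apply H.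
  intros x Hx. rewrite clamp_in; auto. lra.
Qed.

Lemma PC_comp l a b f (phi : R -> R) : PC l a b f -> (forall x, continuous phi x) ->
  PC l a b (fun s => phi (f s)).
Proof.
  intros H Hp p q H1 H2 H3 H4. destruct (H p q H1 H2 H3 H4) as [g [Hg Heq]].
  exists (fun s => phi (g s)). split. intros x. apply continuous_comp; auto.
  intros x Hx. rewrite Heq; auto.
Qed.

Lemma PC_op2 l1 l2 a b f1 f2 (op : R -> R -> R) :
  (forall g1 g2 : R -> R, (forall x, continuous g1 x) -> (forall x, continuous g2 x) ->
      forall x, continuous (fun s => op (g1 s) (g2 s)) x) ->
  PC l1 a b f1 -> PC l2 a b f2 -> PC (l1 ++ l2) a b (fun s => op (f1 s) (f2 s)).
Proof.
  intros Hop H1 H2 p q Hp Hpq Hq Hy.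
  destruct (H1 p q) as [g1 [Hg1 E1]]; auto. intros y Hyl. apply Hy. apply in_or_app; auto.
  destruct (H2 p q) as [g2 [Hg2 E2]]; auto. intros y Hyl. apply Hy. apply in_or_app; auto.
  exists (fun s => op (g1 s) (g2 s)). split. apply Hop; auto.
  intros x Hx. rewrite E1, E2; auto.
Qed.

Lemma PC_plus l1 l2 a b f1 f2 : PC l1 a b f1 -> PC l2 a b f2 -> PC (l1 ++ l2) a b (fun s => f1 s + f2 s).
Proof.
  apply PC_op2. intros g1 g2 H1 H2 x.
  apply (continuous_plus g1 g2); auto.
Qed.

Lemma PC_mult l1 l2 a b f1 f2 : PC l1 a b f1 -> PC l2 a b f2 -> PC (l1 ++ l2) a b (fun s => f1 s * f2 s).
Proof.
  apply PC_op2. intros g1 g2 H1 H2 x.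
  apply (continuous_mult g1 g2); auto.
Qed.

Lemma PC_ext l a b f g : PC l a b f -> (forall x, f x = g x) -> PC l a b g.
Proof.
  intros H E p q H1 H2 H3 H4. destruct (H p q H1 H2 H3 H4) as [h [Hh Eh]].
  exists h. split; auto. intros x Hx. rewrite <- E; auto.
Qed.

Lemma PC_ex_RInt l : forall a b f, PC l a b f -> a <= b -> ex_RInt f a b.
Proof.
  induction l as [|x l IH]; intros a b f H Hab.
  - destruct (Req_dec a b) as [E|E].
    + subst. apply ex_RInt_point.
    + destruct (H a b) as [g [Hg Eg]]; try lra. intros y [].
      apply ex_RInt_ext with g.
      { intros z Hz. rewrite Rmin_left, Rmax_right in Hz by lra. symmetry; apply Eg; auto. }
      apply (ex_RInt_continuous (V:=R_CompleteNormedModule)). intros; apply Hg.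
  - destruct (Rlt_dec a x) as [H1|H1]; [destruct (Rlt_dec x b) as [H2|H2]|].
    + apply ex_RInt_Chasles with x.
      * apply IH. 2: lra. intros p q Hp Hpq Hq Hy. apply H; try lra.
        intros y [<-|Hy']; [lra| apply Hy; auto].
      * apply IH. 2: lra. intros p q Hp Hpq Hq Hy. apply H; try lra.
        intros y [<-|Hy']; [lra| apply Hy; auto].
    + apply IH; auto. intros p q Hp Hpq Hq Hy. apply H; try lra.
      intros y [<-|Hy']; [lra| apply Hy; auto].
    + apply IH; auto. intros p q Hp Hpq Hq Hy. apply H; try lra.
      intros y [<-|Hy']; [lra| apply Hy; auto].
Qed.

Lemma gap_nbhd l : forall a b t, a < t < b -> ~ In t l ->
  exists p q, a <= p < t /\ t < q <= b /\ forall y, In y l -> ~ (p < y < q).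
Proof.
  induction l as [|x l IH]; intros a b t Ht Hn.
  - exists a, b. split. lra. split. lra. intros y [].
  - destruct (IH a b t) as [p [q [Hp [Hq Hy]]]]; auto. intros Hi; apply Hn; right; auto.
    assert (x <> t) by (intros E; apply Hn; left; auto).
    destruct (Rlt_dec x t).
    + exists (Rmax p x), q. split. unfold Rmax; destruct Rle_dec; lra. split. lra.
      intros y [<-|Hy']. unfold Rmax; destruct Rle_dec; lra.
      intros Hc. apply (Hy y Hy'). unfold Rmax in Hc; destruct Rle_dec in Hc; lra.
    + exists p, (Rmin q x). split. lra. split. unfold Rmin; destruct Rle_dec; lra.
      intros y [<-|Hy']. unfold Rmin; destruct Rle_dec; lra.
      intros Hc. apply (Hy y Hy'). unfold Rmin in Hc; destruct Rle_dec in Hc; lra.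
Qed.

Lemma loc_in p q t : p < t < q -> locally t (fun s => p < s < q).
Proof.
  intros H. apply locR. exists (Rmin (t - p) (q - t)). split.
  unfold Rmin; destruct Rle_dec; lra.
  intros y Hy. unfold Rmin in Hy; destruct Rle_dec in Hy; unfold Rabs in Hy; destruct Rcase_abs in Hy; lra.
Qed.

Lemma DER (l : list R) (a b : R) (g v : R -> R) (t : R) :
  (forall s, a <= s <= b -> is_RInt g a s (v s - v a)) -> PC l a b g ->
  a < t < b -> ~ In t l -> is_derive v t (g t).
Proof.
  intros Hv Hg Ht Hn.
  destruct (gap_nbhd l a b t Ht Hn) as [p [q [Hp [Hq Hy]]]].
  destruct (Hg p q) as [G [HG EG]]; try lra; auto.
  assert (L : locally t (fun s => is_RInt G t s (v s - v t))).
  { apply (filter_imp (fun s => p < s < q)). 2: apply loc_in; lra.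
    intros s Hs.
    apply is_RInt_ext with g.
    { intros x Hx. apply EG. unfold Rmin, Rmax in Hx; repeat destruct Rle_dec in Hx; lra. }
    replace (v s - v t) with (plus (opp (v t - v a)) (v s - v a)).
    2: { unfold plus, opp; simpl; ring. }
    apply (is_RInt_Chasles g t a s (opp (v t - v a)) (v s - v a)).
    apply (is_RInt_swap g t a (v t - v a)). apply Hv; lra. apply Hv; lra. }
  pose proof (is_derive_RInt G (fun s => v s - v t) t t L (HG t)) as D.
  rewrite EG by lra.
  apply is_derive_ext with (fun s => plus (v s - v t) (v t)).
  { intros s. unfold plus; simpl; ring. }
  replace (G t) with (plus (G t) zero). 2: { unfold plus, zero; simpl; ring. }
  apply (is_derive_plus (fun s => v s - v t) (fun _ => v t) t (G t) zero). exact D. apply is_derive_const.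
Qed.

Lemma B2 (a b : R) (F H : R -> R) : a < b -> cw a b F -> (forall x, continuous H x) ->
  (forall t, a < t < b -> is_derive F t (H t)) -> is_RInt H a b (F b - F a).
Proof.
  intros Hab HF HH HD.
  assert (Ex : forall u v, ex_RInt H u v).
  { intros u v. apply (ex_RInt_continuous (V:=R_CompleteNormedModule)). intros; apply HH. }
  set (K := fun s => minus (F (clamp a b s)) (RInt H a s)).
  assert (DK : forall s, is_derive (RInt H a) s (H s)).
  { intros s. apply (is_derive_RInt H (RInt H a) a s). apply filter_forall. intros; apply (RInt_correct (V:=R_CompleteNormedModule)); auto. apply HH. }
  destruct (MVT_gen K a b (fun _ => 0)) as [c [_ Hc]].
  - rewrite Rmin_left, Rmax_right by lra. intros x Hx.
    replace 0 with (minus (H x) (H x)). 2: { unfold minus, plus, opp; simpl; ring. }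
    apply (is_derive_minus (fun s => F (clamp a b s)) (RInt H a) x (H x) (H x)). 2: apply DK.
    apply is_derive_ext_loc with F. 2: apply HD; auto.
    apply (filter_imp (fun s => a < s < b)). 2: apply loc_in; auto.
    intros s Hs. rewrite clamp_in; auto; lra.
  - intros x Hx. apply continuity_pt_filterlim. apply (continuous_minus (fun s => F (clamp a b s)) (RInt H a)). apply HF.
    apply ex_derive_continuous. eexists. apply DK.
  - unfold K in Hc. rewrite !clamp_in in Hc by lra. rewrite RInt_point in Hc.
    unfold minus, plus, opp, zero in Hc; simpl in Hc.
    replace (F b - F a) with (RInt H a b) by lra. apply (RInt_correct (V:=R_CompleteNormedModule)); auto.
Qed.

Lemma INT (l : list R) : forall (a b : R) (F h : R -> R), a <= b -> cw a b F -> PC l a b h ->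
  (forall t, a < t < b -> ~ In t l -> is_derive F t (h t)) -> is_RInt h a b (F b - F a).
Proof.
  induction l as [|x l IH]; intros a b F h Hab HF Hh HD.
  - destruct (Req_dec a b) as [E|E].
    + subst. replace (F b - F b) with (@zero R_NormedModule). apply is_RInt_point.
      unfold zero; simpl; ring.
    + destruct (Hh a b) as [g [Hg Eg]]; try lra. intros y [].
      apply is_RInt_ext with g.
      { intros z Hz. rewrite Rmin_left, Rmax_right in Hz by lra. symmetry; apply Eg; auto. }
      apply B2; auto. lra. intros t Ht. rewrite <- Eg by auto. apply HD; auto.
  - assert (HPC : forall a' b', a <= a' -> b' <= b -> (x <= a' \/ b' <= x) -> PC l a' b' h).
    { intros a' b' H1 H2 H3 p q Hp Hpq Hq Hy. apply Hh; try lra.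
      intros y [<-|Hy']; [lra| apply Hy; auto]. }
    destruct (Rlt_dec a x) as [H1|H1]; [destruct (Rlt_dec x b) as [H2|H2]|].
    + replace (F b - F a) with (plus (F x - F a) (F b - F x)).
      2: { unfold plus; simpl; ring. }
      apply (is_RInt_Chasles h a x b (F x - F a) (F b - F x)).
      * apply IH; try lra. apply cw_sub with a b; auto; lra. apply HPC; lra.
        intros t Ht Hn. apply HD. lra. intros [E|E]; [lra|auto].
      * apply IH; try lra. apply cw_sub with a b; auto; lra. apply HPC; lra.
        intros t Ht Hn. apply HD. lra. intros [E|E]; [lra|auto].
    + apply IH; auto. apply HPC; lra.
      intros t Ht Hn. apply HD. lra. intros [E|E]; [lra|auto].
    + apply IH; auto. apply HPC; lra.
      intros t Ht Hn. apply HD. lra. intros [E|E]; [lra|auto].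
Qed.

Lemma MON (l : list R) (a b : R) (F h : R -> R) : a <= b -> cw a b F -> PC l a b h ->
  (forall t, a < t < b -> ~ In t l -> is_derive F t (h t) /\ h t <= 0) -> F b <= F a.
Proof.
  intros Hab HF Hh HD.
  assert (I : is_RInt (fun s => Rmin (h s) 0) a b (F b - F a)).
  { apply INT with l; auto.
    - apply PC_comp with (phi := fun u => Rmin u 0); auto.
      intros x. apply lip_cont with 1. intros s t. unfold Rmin; repeat destruct Rle_dec; unfold Rabs; repeat destruct Rcase_abs; lra.
    - intros t Ht Hn. destruct (HD t Ht Hn) as [D1 D2]. rewrite Rmin_left by lra. auto. }
  assert (I0 : is_RInt (fun _ => 0) a b 0).
  { pose proof (is_RInt_const (V:=R_NormedModule) a b 0) as C.
    change (is_RInt (fun _ : R => 0) a b ((b - a) * 0)) in C. rewrite Rmult_0_r in C. exact C. }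
  pose proof (is_RInt_le _ _ a b _ _ Hab I I0) as Le.
  assert (F b - F a <= 0). apply Le. intros. apply Rmin_r. lra.
Qed.

Lemma cw_of_RInt (a b : R) (g v : R -> R) (M : R) :
  (forall s, a <= s <= b -> is_RInt g a s (v s - v a)) ->
  (forall s, a <= s <= b -> Rabs (g s) <= M) -> a <= b -> cw a b v.
Proof.
  intros Hv Hg Hab t. apply lip_cont with M. intros s1 s2.
  pose proof (clamp_range a b s1 Hab). pose proof (clamp_range a b s2 Hab).
  set (c1 := clamp a b s1) in *. set (c2 := clamp a b s2) in *.
  assert (I : is_RInt g c2 c1 (v c1 - v c2)).
  { replace (v c1 - v c2) with (plus (opp (v c2 - v a)) (v c1 - v a)).
    2: { unfold plus, opp; simpl; ring. }
    apply (is_RInt_Chasles g c2 a c1 (opp (v c2 - v a)) (v c1 - v a)). apply (is_RInt_swap g c2 a (v c2 - v a)). apply Hv; lra. apply Hv; lra. }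
  pose proof (norm_RInt_le_const_abs g c2 c1 (v c1 - v c2) M) as N.
  assert (Rabs (v c1 - v c2) <= Rabs (c1 - c2) * M).
  { apply N; auto. intros x Hx. apply Hg. unfold Rmin, Rmax in Hx; repeat destruct Rle_dec in Hx; lra. }
  assert (0 <= M). { apply Rle_trans with (Rabs (g a)). apply Rabs_pos. apply Hg; lra. }
  pose proof (clamp_lip a b s1 s2 Hab). fold c1 c2 in H3. nra.
Qed.

Lemma RInt_bound a b g : ex_RInt g a b -> exists M, forall s, Rmin a b <= s <= Rmax a b -> Rabs (g s) <= M.
Proof. intros H. destruct (ex_RInt_ub g a b H) as [M HM]. exists M. exact HM. Qed.

Ltac incl_tac := let y := fresh in let Hy := fresh in intros y Hy;
  repeat (apply in_app_or in Hy; destruct Hy as [Hy|Hy]); auto; try contradiction.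

Ltac exd := repeat split; eexists; eassumption.
Ltac fixd H := match type of H with is_derive ?f ?t ?l =>
  replace (Derive (fun x => f x) t) with l by (symmetry; apply is_derive_unique; exact H) end.

Lemma cont_der (phi : R -> R) : (forall x, ex_derive phi x) -> forall x, continuous phi x.
Proof. intros H x. apply (ex_derive_continuous (K:=R_AbsRing) (V:=R_NormedModule) phi x). auto. Qed.

Lemma cont_exp (x : R) : continuous exp x.
Proof. apply cont_der. intros; auto_derive; auto. Qed.

Lemma cw_ext a b F G : cw a b F -> (forall x, F x = G x) -> cw a b G.
Proof. intros H E t. apply continuous_ext with (fun s => F (clamp a b s)). intros; apply E. apply H. Qed.

Lemma cw_sq a b F : cw a b F -> cw a b (fun s => F s ^ 2).
Proof. intros H. apply cw_comp with (phi := fun x => x ^ 2); auto. apply cont_der. intros; auto_derive; auto. Qed.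

Lemma cw_explin a b k : a <= b -> cw a b (fun s => exp (k * s)).
Proof. intros. apply cw_comp with (F := fun s => k * s). apply cw_mult. apply cw_const. apply cw_id; auto. apply cont_exp. Qed.

Lemma PC_cwm l a b k f : cw a b k -> PC l a b f -> PC l a b (fun s => k s * f s).
Proof. intros H1 H2. apply (PC_mult nil l a b k f); auto. apply PC_cw; auto. Qed.

Lemma PC_cwp l a b k f : cw a b k -> PC l a b f -> PC l a b (fun s => k s + f s).
Proof. intros H1 H2. apply (PC_plus nil l a b k f); auto. apply PC_cw; auto. Qed.

Lemma PC_plus' l a b f g : PC l a b f -> PC l a b g -> PC l a b (fun s => f s + g s).
Proof. intros. apply PC_mono with (l ++ l) a b; try lra; auto. apply PC_plus; auto. incl_tac. Qed.

Lemma PC_mult' l a b f g : PC l a b f -> PC l a b g -> PC l a b (fun s => f s * g s).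
Proof. intros. apply PC_mono with (l ++ l) a b; try lra; auto. apply PC_mult; auto. incl_tac. Qed.

Lemma GRON2 (l : list R) (T lam : R) (D1 D2 h1 h2 : R -> R) :
  0 <= T -> cw 0 T D1 -> cw 0 T D2 -> PC l 0 T h1 -> PC l 0 T h2 ->
  (forall s, 0 <= s <= T -> is_RInt h1 0 s (D1 s - D1 0)) ->
  (forall s, 0 <= s <= T -> is_RInt h2 0 s (D2 s - D2 0)) ->
  (forall s, 0 <= s <= T -> D1 s * h1 s + D2 s * h2 s <= lam * (D1 s ^ 2 + D2 s ^ 2)) ->
  D1 T ^ 2 + D2 T ^ 2 <= (D1 0 ^ 2 + D2 0 ^ 2) * exp (2 * lam * T).
Proof.
  intros HT C1 C2 P1 P2 I1 I2 Hl.
  set (E := fun s => (D1 s ^ 2 + D2 s ^ 2) * exp (- (2 * lam) * s)).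
  set (h := fun s => (2 * (D1 s * h1 s + D2 s * h2 s) - 2 * lam * (D1 s ^ 2 + D2 s ^ 2)) * exp (- (2 * lam) * s)).
  assert (Ce : cw 0 T (fun s => exp (- (2 * lam) * s))) by (apply cw_explin; auto).
  assert (M : E T <= E 0).
  { apply MON with l h; auto.
    - unfold E. apply cw_mult; auto. apply cw_plus; apply cw_sq; auto.
    - apply PC_ext with (fun s => (2 * D1 s * exp (- (2 * lam) * s)) * h1 s +
         ((2 * D2 s * exp (- (2 * lam) * s)) * h2 s + (- 2 * lam * (D1 s ^ 2 + D2 s ^ 2) * exp (- (2 * lam) * s)))).
      2: { intros x; unfold h; ring. }
      apply PC_plus'. apply PC_cwm; auto. apply cw_mult; auto. apply cw_mult; auto. apply cw_const.
      apply PC_plus'. apply PC_cwm; auto. apply cw_mult; auto. apply cw_mult; auto. apply cw_const.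
      apply PC_mono with nil 0 T; try lra. 2: incl_tac. apply PC_cw.
      apply cw_mult; auto. apply cw_mult. apply cw_const. apply cw_plus; apply cw_sq; auto.
    - intros t Ht Hn. split.
      + unfold E, h. pose proof (DER l 0 T h1 D1 t I1 P1 Ht Hn) as d1.
        pose proof (DER l 0 T h2 D2 t I2 P2 Ht Hn) as d2.
        auto_derive. exd. fixd d1. fixd d2. ring.
      + unfold h. pose proof (Hl t ltac:(lra)). pose proof (exp_pos (- (2 * lam) * t)). nra. }
  unfold E in M. rewrite Rmult_0_r, exp_0, Rmult_1_r in M.
  pose proof (exp_pos (2 * lam * T)).
  replace (D1 T ^ 2 + D2 T ^ 2) with ((D1 T ^ 2 + D2 T ^ 2) * exp (- (2 * lam) * T) * exp (2 * lam * T)).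
  apply Rmult_le_compat_r; lra.
  rewrite Rmult_assoc, <- exp_plus. replace (- (2 * lam) * T + 2 * lam * T) with 0 by ring. rewrite exp_0. ring.
Qed.

Definition sh (x : R) := (exp x - exp (- x)) / 2.
Definition ch (x : R) := (exp x + exp (- x)) / 2.

Lemma exp_le x y : x <= y -> exp x <= exp y.
Proof. intros [H|H]. left; apply exp_increasing; auto. subst; lra. Qed.

Lemma ch_ge1 x : 1 <= ch x.
Proof. unfold ch. pose proof (exp_ineq1_le x). pose proof (exp_ineq1_le (-x)). lra. Qed.

Lemma ch_sq x : ch x ^ 2 = 1 + sh x ^ 2.
Proof.
  unfold ch, sh. assert (exp x * exp (- x) = 1). rewrite <- exp_plus. replace (x + - x) with 0 by ring. apply exp_0.
  nra.
Qed.

Lemma ch_minus_sh x : ch x - sh x = exp (- x).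
Proof. unfold ch, sh. field. Qed.

Lemma ch_plus_sh x : ch x + sh x = exp x.
Proof. unfold ch, sh. field. Qed.

Lemma der_sh x : is_derive sh x (ch x).
Proof. unfold sh, ch. auto_derive; auto. field. Qed.
Lemma der_ch x : is_derive ch x (sh x).
Proof. unfold sh, ch. auto_derive; auto. field. Qed.

Lemma cont_sh x : continuous sh x.
Proof. apply cont_der. intros; eexists; apply der_sh. Qed.
Lemma cont_ch x : continuous ch x.
Proof. apply cont_der. intros; eexists; apply der_ch. Qed.

Lemma ch_le A c : Rabs c <= A -> ch c <= exp A.
Proof.
  intros H. unfold ch. pose proof (exp_le c A). pose proof (exp_le (- c) A).
  unfold Rabs in H; destruct Rcase_abs in H; lra.
Qed.
Lemma sh_abs_le A c : Rabs c <= A -> Rabs (sh c) <= exp A.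
Proof.
  intros H. unfold sh. pose proof (exp_le c A). pose proof (exp_le (- c) A).
  pose proof (exp_pos c). pose proof (exp_pos (-c)).
  assert (c <= A /\ - c <= A) by (unfold Rabs in H; destruct Rcase_abs in H; lra).
  unfold Rabs; destruct Rcase_abs; lra.
Qed.

Lemma mvt_gen2 (f df : R -> R) u v : (forall x, is_derive f x (df x)) ->
  exists c, Rmin u v <= c <= Rmax u v /\ f u - f v = df c * (u - v).
Proof.
  intros H. destruct (MVT_gen f v u df) as [c [Hc E]].
  intros; apply H. intros; apply continuity_pt_filterlim. apply cont_der. intros; eexists; apply H.
  exists c. split. rewrite Rmin_comm, Rmax_comm; auto. auto.
Qed.

Lemma sh_mono a b : (a - b) ^ 2 <= (sh a - sh b) * (a - b).
Proof.
  destruct (mvt_gen2 sh ch a b der_sh) as [c [_ E]]. rewrite E.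
  pose proof (ch_ge1 c). pose proof (pow2_ge_0 (a - b)). nra.
Qed.

Lemma sh_ge x : 0 <= x -> x <= sh x.
Proof.
  intros H. pose proof (sh_mono x 0). unfold sh in H0 at 2. rewrite Ropp_0, exp_0 in H0.
  destruct H as [H|H]. 2: { subst. unfold sh. rewrite Ropp_0, exp_0. lra. }
  replace ((1 - 1) / 2) with 0 in H0 by field. nra.
Qed.

Lemma abs_le_bet c u v A : Rmin u v <= c <= Rmax u v -> Rabs u <= A -> Rabs v <= A -> Rabs c <= A.
Proof. unfold Rmin, Rmax, Rabs; repeat destruct Rle_dec; repeat destruct Rcase_abs; lra. Qed.

Lemma sh_lip A u v : Rabs u <= A -> Rabs v <= A -> Rabs (sh u - sh v) <= exp A * Rabs (u - v).
Proof.
  intros Hu Hv. destruct (mvt_gen2 sh ch u v der_sh) as [c [Hc E]]. rewrite E, Rabs_mult.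
  apply Rmult_le_compat_r. apply Rabs_pos. rewrite Rabs_pos_eq. apply ch_le. eapply abs_le_bet; eauto.
  pose proof (ch_ge1 c); lra.
Qed.

Lemma ch_lip A u v : Rabs u <= A -> Rabs v <= A -> Rabs (ch u - ch v) <= exp A * Rabs (u - v).
Proof.
  intros Hu Hv. destruct (mvt_gen2 ch sh u v der_ch) as [c [Hc E]]. rewrite E, Rabs_mult.
  apply Rmult_le_compat_r. apply Rabs_pos. apply sh_abs_le. eapply abs_le_bet; eauto.
Qed.

Definition Psi (b A x : R) := - b * sh (clamp (- A) A x).

Lemma clamp_abs A x : 0 <= A -> Rabs (clamp (- A) A x) <= A.
Proof. intros. pose proof (clamp_range (-A) A x ltac:(lra)). unfold Rabs; destruct Rcase_abs; lra. Qed.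

Lemma Psi_bound b A x : 0 < b -> 0 <= A -> Rabs (Psi b A x) <= b * exp A.
Proof.
  intros. unfold Psi. rewrite Rabs_mult, Rabs_Ropp, Rabs_pos_eq by lra.
  apply Rmult_le_compat_l. lra. apply sh_abs_le. apply clamp_abs; auto.
Qed.

Lemma Psi_lip b A x y : 0 < b -> 0 <= A -> Rabs (Psi b A x - Psi b A y) <= b * exp A * Rabs (x - y).
Proof.
  intros. unfold Psi. replace (- b * sh (clamp (- A) A x) - - b * sh (clamp (- A) A y)) with
    (- b * (sh (clamp (- A) A x) - sh (clamp (- A) A y))) by ring.
  rewrite Rabs_mult, Rabs_Ropp, (Rabs_pos_eq b) by lra. rewrite Rmult_assoc.
  apply Rmult_le_compat_l. lra.
  eapply Rle_trans. apply sh_lip; apply clamp_abs; auto.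
  apply Rmult_le_compat_l. pose proof (exp_pos A); lra.
  pose proof (clamp_lip (-A) A x y ltac:(lra)). lra.
Qed.

Lemma Psi_cont b A x : 0 < b -> 0 <= A -> continuous (Psi b A) x.
Proof. intros. apply lip_cont with (b * exp A). intros; apply Psi_lip; auto. Qed.

Lemma Psi_in b A x : Rabs x <= A -> Psi b A x = - b * sh x.
Proof. intros. unfold Psi. rewrite clamp_in; auto. unfold Rabs in H; destruct Rcase_abs in H; lra. Qed.

Lemma clamp_hi A x : 0 <= A -> A <= x -> clamp (- A) A x = A.
Proof. intros. unfold clamp, Rmax, Rmin. repeat destruct Rle_dec; lra. Qed.
Lemma clamp_lo A x : 0 <= A -> x <= - A -> clamp (- A) A x = - A.
Proof. intros. unfold clamp, Rmax, Rmin. repeat destruct Rle_dec; lra. Qed.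
Lemma sh_odd x : sh (- x) = - sh x.
Proof. unfold sh. rewrite Ropp_involutive. field. Qed.

Definition sqp (x : R) := Rmax x 0 ^ 2.

Lemma der_sqp x : is_derive sqp x (2 * Rmax x 0).
Proof.
  destruct (Rlt_dec 0 x) as [H|H]; [|destruct (Rlt_dec x 0) as [H'|H']].
  - apply is_derive_ext_loc with (fun y => y ^ 2).
    apply (filter_imp (fun y => 0 < y < x + 1)). 2: apply loc_in; lra.
    intros y Hy. unfold sqp. rewrite Rmax_left; lra.
    rewrite Rmax_left by lra. auto_derive; auto. ring.
  - apply is_derive_ext_loc with (fun y => 0).
    apply (filter_imp (fun y => x - 1 < y < 0)). 2: apply loc_in; lra.
    intros y Hy. unfold sqp. rewrite Rmax_right; lra.
    rewrite Rmax_right by lra. replace (2 * 0) with (@zero R_NormedModule). apply is_derive_const.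
    unfold zero; simpl; ring.
  - assert (x = 0) by lra. subst. rewrite Rmax_right by lra.
    apply is_derive_Reals. intros eps Heps. exists (mkposreal eps Heps). simpl. intros h Hh Hl.
    unfold sqp. rewrite Rplus_0_l, (Rmax_right 0 0) by lra.
    unfold Rmax; destruct Rle_dec.
    + replace ((0 ^ 2 - 0 ^ 2) / h - 2 * 0) with 0 by (field; auto). rewrite Rabs_R0; auto.
    + replace ((h ^ 2 - 0 ^ 2) / h - 2 * 0) with h by (field; auto). auto.
Qed.

Lemma sqp_ge0 x : 0 <= sqp x.
Proof. unfold sqp. apply pow2_ge_0. Qed.

Lemma sqp_0 x : sqp x = 0 -> x <= 0.
Proof. unfold sqp, Rmax. destruct Rle_dec; intros; try lra. nra. Qed.

Lemma sqp_neg x : x <= 0 -> sqp x = 0.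
Proof. unfold sqp. intros. rewrite Rmax_right by lra. ring. Qed.

Lemma cont_sqp x : continuous sqp x.
Proof. apply cont_der. intros; eexists; apply der_sqp. Qed.

Definition pcf (f : R -> R) := forall a b, exists l, PC l a b f.

Lemma INV (a : R -> R) (b A Ca : R) (z : R -> R) :
  0 < b -> 0 <= A -> (forall t, Rabs (a t) <= Ca) -> Ca <= b * sh A -> pcf a ->
  Rabs (z 0) <= A -> (forall t, continuous z t) ->
  (forall t, 0 <= t -> is_RInt (fun u => a u + Psi b A (z u)) 0 t (z t - z 0)) ->
  forall t, 0 <= t -> Rabs (z t) <= A.
Proof.
  intros Hb HA Ha HC Hp Hz0 Hc Hi t Ht.
  destruct (Hp 0 t) as [l Hl].
  assert (Pg : PC l 0 t (fun u => a u + Psi b A (z u))).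
  { apply PC_mono with (l ++ nil) 0 t; try lra. 2: incl_tac. apply PC_plus; auto. apply PC_cw.
    apply cw_cont; auto. intros; apply continuous_comp; auto. apply Psi_cont; auto. }
  assert (Dz : forall s, 0 < s < t -> ~ In s l -> is_derive z s (a s + Psi b A (z s))).
  { intros s Hs Hn. apply (DER l 0 t (fun u => a u + Psi b A (z u)) z s); auto. intros; apply Hi; lra. }
  assert (U : z t <= A).
  { assert (M : sqp (z t - A) <= sqp (z 0 - A)).
    { apply (MON l 0 t (fun s => sqp (z s - A)) (fun s => 2 * Rmax (z s - A) 0 * (a s + Psi b A (z s)))); auto.
      - apply cw_cont; auto. intros. apply continuous_comp with (g := sqp). 2: apply cont_sqp.
        apply (continuous_minus z (fun _ => A)); auto. apply continuous_const.
      - apply PC_cwm; auto. apply cw_cont; auto. intros. apply (continuous_mult (fun _ => 2) (fun s => Rmax (z s - A) 0)).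
        apply continuous_const. apply continuous_comp with (g := fun u => Rmax u 0).
        apply (continuous_minus z (fun _ => A)); auto. apply continuous_const.
        apply lip_cont with 1. intros. unfold Rmax; repeat destruct Rle_dec; unfold Rabs; repeat destruct Rcase_abs; lra.
      - intros s Hs Hn. split.
        + pose proof (Dz s Hs Hn) as d.
          assert (d' : is_derive (fun s => z s - A) s (a s + Psi b A (z s))).
          { auto_derive. exd. fixd d. ring. }
          pose proof (is_derive_comp sqp (fun s => z s - A) s _ _ (der_sqp (z s - A)) d') as dd.
          replace (2 * Rmax (z s - A) 0 * (a s + Psi b A (z s))) with (scal (a s + Psi b A (z s)) (2 * Rmax (z s - A) 0)).
          exact dd. unfold scal; simpl; unfold mult; simpl; ring.
        + destruct (Rle_dec (z s) A).
          * rewrite Rmax_right by lra. lra.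
          * rewrite Rmax_left by lra. unfold Psi. rewrite clamp_hi by lra.
            pose proof (Ha s). pose proof (Rle_abs (a s)). nra. }
    rewrite (sqp_neg (z 0 - A)) in M. 2: { unfold Rabs in Hz0; destruct Rcase_abs in Hz0; lra. }
    pose proof (sqp_ge0 (z t - A)). assert (E0 : sqp (z t - A) = 0) by lra. apply sqp_0 in E0. lra. }
  assert (Lo : - A <= z t).
  { assert (M : sqp (- A - z t) <= sqp (- A - z 0)).
    { apply (MON l 0 t (fun s => sqp (- A - z s)) (fun s => 2 * Rmax (- A - z s) 0 * (- (a s + Psi b A (z s))))); auto.
      - apply cw_cont; auto. intros. apply continuous_comp with (g := sqp). 2: apply cont_sqp.
        apply (continuous_minus (fun _ => - A) z); auto. apply continuous_const.
      - apply PC_cwm; auto. apply cw_cont; auto. intros. apply (continuous_mult (fun _ => 2) (fun s => Rmax (- A - z s) 0)).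
        apply continuous_const. apply continuous_comp with (g := fun u => Rmax u 0).
        apply (continuous_minus (fun _ => - A) z); auto. apply continuous_const.
        apply lip_cont with 1. intros. unfold Rmax; repeat destruct Rle_dec; unfold Rabs; repeat destruct Rcase_abs; lra.
        apply PC_ext with (fun s => (-1) * (a s + Psi b A (z s))). 2: intros; ring.
        apply PC_cwm; auto. apply cw_const.
      - intros s Hs Hn. split.
        + pose proof (Dz s Hs Hn) as d.
          assert (d' : is_derive (fun s => - A - z s) s (- (a s + Psi b A (z s)))).
          { auto_derive. exd. fixd d. ring. }
          pose proof (is_derive_comp sqp (fun s => - A - z s) s _ _ (der_sqp (- A - z s)) d') as dd.
          replace (2 * Rmax (- A - z s) 0 * (- (a s + Psi b A (z s)))) with (scal (- (a s + Psi b A (z s))) (2 * Rmax (- A - z s) 0)).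
          exact dd. unfold scal; simpl; unfold mult; simpl; ring.
        + destruct (Rle_dec (- A) (z s)).
          * rewrite Rmax_right by lra. lra.
          * rewrite Rmax_left by lra. unfold Psi. rewrite clamp_lo, sh_odd by lra.
            pose proof (Ha s). pose proof (Rle_abs (- a s)). rewrite Rabs_Ropp in H0. nra. }
    rewrite (sqp_neg (- A - z 0)) in M. 2: { unfold Rabs in Hz0; destruct Rcase_abs in Hz0; lra. }
    pose proof (sqp_ge0 (- A - z t)). assert (E0 : sqp (- A - z t) = 0) by lra. apply sqp_0 in E0. lra. }
  unfold Rabs; destruct Rcase_abs; lra.
Qed.

Lemma lim_bound2 (u v : nat -> R) (l1 l2 M : R) :
  is_lim_seq u l1 -> is_lim_seq v l2 -> (forall n, Rabs (u n - v n) <= M) -> Rabs (l1 - l2) <= M.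
Proof.
  intros H1 H2 H. pose proof (is_lim_seq_minus' u v l1 l2 H1 H2) as H3.
  apply is_lim_seq_abs in H3.
  pose proof (is_lim_seq_le _ _ _ _ H H3 (is_lim_seq_const M)). simpl in H0. auto.
Qed.

Lemma pow_half_small C eps : 0 < eps -> exists N, forall n, (N <= n)%nat -> C * (/2) ^ n < eps.
Proof.
  intros He. destruct (pow_lt_1_zero (/2) ltac:(rewrite Rabs_pos_eq; lra) (eps / (Rabs C + 1))) as [N HN].
  apply Rdiv_lt_0_compat; auto. pose proof (Rabs_pos C); lra.
  exists N. intros n Hn. specialize (HN n Hn). pose proof (pow_le (/2) n ltac:(lra)).
  rewrite Rabs_pos_eq in HN by auto. pose proof (Rabs_pos C). pose proof (Rle_abs C).
  apply Rle_lt_trans with (Rabs C * (/2)^n). nra.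
  apply Rle_lt_trans with (Rabs C * (eps / (Rabs C + 1))). nra.
  apply Rmult_lt_reg_r with (Rabs C + 1). lra. field_simplify; nra.
Qed.

Lemma zero_of_small X C : 0 <= X -> (forall n, X <= C * (/2) ^ n) -> X = 0.
Proof.
  intros H0 H. destruct H0 as [H0|H0]; auto.
  destruct (pow_half_small C X H0) as [N HN]. specialize (HN N (le_n N)). specialize (H N). lra.
Qed.

Definition RI (g : R -> R) (u v : R) : R := RInt g u v.

Fixpoint zs (a Ps : R -> R) (z0 : R) (n : nat) : R -> R :=
  match n with
  | O => fun _ => z0
  | S n => fun t => z0 + RI (fun u => a u + Ps (zs a Ps z0 n u)) 0 t
  end.

Definition zl (a Ps : R -> R) (z0 : R) (t : R) : R := real (Lim_seq (fun n => zs a Ps z0 n (Rmax 0 t))).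

Lemma integ_ok (a Ps w : R -> R) : pcf a -> (forall x, continuous Ps x) -> (forall x, continuous w x) ->
  forall u v, ex_RInt (fun s => a s + Ps (w s)) u v.
Proof.
  intros Ha HP Hw.
  assert (forall u v, u <= v -> ex_RInt (fun s => a s + Ps (w s)) u v).
  { intros u v Huv. destruct (Ha u v) as [l Hl]. apply PC_ex_RInt with (l ++ nil); auto.
    apply PC_plus; auto. apply PC_cw. apply cw_cont; auto. intros; apply continuous_comp; auto. }
  intros u v. destruct (Rle_dec u v). auto. apply ex_RInt_swap. apply H. lra.
Qed.

Lemma RInt_diff_lip (g : R -> R) B : (forall u v, ex_RInt g u v) -> (forall x, Rabs (g x) <= B) ->
  forall s t, Rabs (RI g 0 t - RI g 0 s) <= B * Rabs (t - s).
Proof.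
  intros He Hb s t.
  replace (RI g 0 t - RI g 0 s) with (RI g s t).
  2: { pose proof (RInt_Chasles (V:=R_CompleteNormedModule) g 0 s t (He _ _) (He _ _)) as E.
        change (RI g 0 s + RI g s t = RI g 0 t) in E. lra. }
  rewrite Rmult_comm. apply (norm_RInt_le_const_abs g s t (RI g s t) B).
  intros; apply Hb. apply (RInt_correct (V:=R_CompleteNormedModule)); auto.
Qed.

Lemma RInt_is (g : R -> R) u v : ex_RInt g u v -> is_RInt g u v (RI g u v).
Proof. intros; apply (RInt_correct (V:=R_CompleteNormedModule)); auto. Qed.

Lemma is_RInt_exp2 k c t : 0 < k -> is_RInt (fun u => c * exp (k * u)) 0 t (c * (exp (k * t) - 1) / k).
Proof.
  intros Hk.
  replace (c * (exp (k * t) - 1) / k) with (minus (c * exp (k * t) / k) (c * exp (k * 0) / k)).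
  2: { rewrite Rmult_0_r, exp_0. unfold minus, plus, opp; simpl. field. lra. }
  apply (is_RInt_derive (fun u => c * exp (k * u) / k)).
  - intros x _. auto_derive; auto. field. lra.
  - intros x _. apply cont_der. intros; auto_derive; auto.
Qed.


Lemma picard_main (a Ps : R -> R) (Ca B0 L z0 : R) :
  pcf a -> (forall t, Rabs (a t) <= Ca) -> (forall x, Rabs (Ps x) <= B0) ->
  (forall x y, Rabs (Ps x - Ps y) <= L * Rabs (x - y)) -> 0 < L ->
  (forall t, continuous (zl a Ps z0) t) /\ zl a Ps z0 0 = z0 /\
  forall t, 0 <= t -> is_RInt (fun u => a u + Ps (zl a Ps z0 u)) 0 t (zl a Ps z0 t - zl a Ps z0 0).
Proof.
  intros Ha HCa HB0 HL HLp.
  assert (HPc : forall x, continuous Ps x) by (intros; apply lip_cont with L; auto).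
  assert (Ca0 : 0 <= Ca) by (eapply Rle_trans; [apply Rabs_pos| apply (HCa 0)]).
  assert (B00 : 0 <= B0) by (eapply Rle_trans; [apply Rabs_pos| apply (HB0 0)]).
  set (B := Ca + B0). set (K := B / (2 * L)).
  assert (K0 : 0 <= K) by (unfold K, B; apply Rmult_le_pos; [lra| left; apply Rinv_0_lt_compat; lra]).
  assert (Gb : forall w : R -> R, forall x, Rabs (a x + Ps (w x)) <= B).
  { intros w x. unfold B. eapply Rle_trans. apply Rabs_triang. pose proof (HCa x). pose proof (HB0 (w x)). lra. }
  assert (Lip : forall n s t, Rabs (zs a Ps z0 n t - zs a Ps z0 n s) <= B * Rabs (t - s)).
  { induction n; intros s t; simpl.
    - rewrite Rminus_eq_0, Rabs_R0. apply Rmult_le_pos. unfold B; lra. apply Rabs_pos.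
    - replace (z0 + RI (fun u : R => a u + Ps (zs a Ps z0 n u)) 0 t -
        (z0 + RI (fun u : R => a u + Ps (zs a Ps z0 n u)) 0 s)) with
        (RI (fun u : R => a u + Ps (zs a Ps z0 n u)) 0 t - RI (fun u : R => a u + Ps (zs a Ps z0 n u)) 0 s) by ring.
      apply RInt_diff_lip. apply integ_ok; auto. intros; apply lip_cont with B; auto. auto. }
  assert (Cn : forall n x, continuous (zs a Ps z0 n) x) by (intros; apply lip_cont with B; auto).
  assert (Ex : forall n u v, ex_RInt (fun s => a s + Ps (zs a Ps z0 n s)) u v) by (intros; apply integ_ok; auto).
  assert (Dn : forall n t, 0 <= t -> Rabs (zs a Ps z0 (S n) t - zs a Ps z0 n t) <= K * (/2) ^ n * exp (2 * L * t)).
  { induction n; intros t Ht.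
    - simpl. replace (z0 + RI (fun u : R => a u + Ps z0) 0 t - z0) with (RI (fun u : R => a u + Ps z0) 0 t) by ring.
      eapply Rle_trans. apply (norm_RInt_le_const (fun u : R => a u + Ps z0) 0 t _ B Ht).
      intros; apply (Gb (fun _ => z0)). apply RInt_is. apply (Ex O).
      pose proof (exp_ineq1_le (2 * L * t)).
      replace (K * 1 * exp (2 * L * t)) with (B * (exp (2 * L * t) / (2 * L))) by (unfold K; field; lra).
      rewrite Rminus_0_r, (Rmult_comm t B). apply Rmult_le_compat_l. unfold B; lra.
      apply Rmult_le_reg_r with (2 * L). lra. field_simplify; lra.
    - set (g1 := fun u => a u + Ps (zs a Ps z0 (S n) u)).
      set (g0 := fun u => a u + Ps (zs a Ps z0 n u)).
      change (Rabs ((z0 + RInt g1 0 t) - (z0 + RInt g0 0 t)) <= K * (/2) ^ (S n) * exp (2 * L * t)).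
      replace ((z0 + RInt g1 0 t) - (z0 + RInt g0 0 t)) with (minus (RInt g1 0 t) (RInt g0 0 t)) by (unfold minus, plus, opp; simpl; ring).
      pose proof (is_RInt_minus g1 g0 0 t _ _ (RInt_is _ _ _ (Ex (S n) 0 t)) (RInt_is _ _ _ (Ex n 0 t))) as Im.
      pose proof (is_RInt_exp2 (2 * L) (L * (K * (/2) ^ n)) t ltac:(lra)) as Ie.
      eapply Rle_trans. apply (norm_RInt_le _ _ 0 t _ _ Ht) with (2 := Im) (3 := Ie).
      + intros x Hx. change (Rabs (g1 x - g0 x) <= L * (K * (/2)^n) * exp (2 * L * x)). unfold g1, g0.
        replace (a x + Ps (zs a Ps z0 (S n) x) - (a x + Ps (zs a Ps z0 n x))) with
          (Ps (zs a Ps z0 (S n) x) - Ps (zs a Ps z0 n x)) by ring.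
        eapply Rle_trans. apply HL. rewrite (Rmult_assoc L). apply Rmult_le_compat_l. lra.
        apply IHn. lra.
      + pose proof (exp_pos (2 * L * t)). simpl.
        apply Rle_trans with (L * (K * (/ 2) ^ n) * exp (2 * L * t) / (2 * L)).
        apply Rmult_le_compat_r. left; apply Rinv_0_lt_compat; lra.
        pose proof (pow_le (/2) n ltac:(lra)). apply Rmult_le_compat_l. apply Rmult_le_pos; [lra| apply Rmult_le_pos; lra]. lra.
        right. field. lra. }
  assert (Cs : forall n k t, 0 <= t -> Rabs (zs a Ps z0 (n + k) t - zs a Ps z0 n t) <=
      2 * K * (/2) ^ n * exp (2 * L * t) - 2 * K * (/2) ^ (n + k) * exp (2 * L * t)).
  { intros n k t Ht. induction k.
    - rewrite Nat.add_0_r, Rminus_eq_0, Rabs_R0. lra.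
    - replace (n + S k)%nat with (S (n + k)) by lia.
      eapply Rle_trans. 
      replace (zs a Ps z0 (S (n + k)) t - zs a Ps z0 n t) with
        ((zs a Ps z0 (S (n + k)) t - zs a Ps z0 (n + k) t) + (zs a Ps z0 (n + k) t - zs a Ps z0 n t)) by ring.
      apply Rabs_triang. pose proof (Dn (n + k)%nat t Ht). change ((/2)^(S (n+k))) with (/2 * (/2)^(n+k)). lra. }
  assert (Cs2 : forall n m t, 0 <= t -> (n <= m)%nat -> Rabs (zs a Ps z0 m t - zs a Ps z0 n t) <= 2 * K * (/2) ^ n * exp (2 * L * t)).
  { intros n m t Ht Hnm. replace m with (n + (m - n))%nat by lia. eapply Rle_trans. apply Cs; auto.
    pose proof (pow_le (/2) (n + (m - n)) ltac:(lra)). pose proof (exp_pos (2 * L * t)).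
    assert (0 <= 2 * K * (/2) ^ (n + (m - n)) * exp (2 * L * t)). apply Rmult_le_pos; try lra. apply Rmult_le_pos; lra. lra. }
  assert (Lim : forall t, 0 <= t -> is_lim_seq (fun n => zs a Ps z0 n t) (zl a Ps z0 t)).
  { intros t Ht. unfold zl. rewrite Rmax_right by lra.
    assert (E : ex_finite_lim_seq (fun n => zs a Ps z0 n t)).
    { apply ex_lim_seq_cauchy_corr. intros eps.
      destruct (pow_half_small (4 * K * exp (2 * L * t)) eps (cond_pos eps)) as [N HN].
      exists N. intros n m Hn Hm.
      pose proof (Cs2 N n t Ht Hn). pose proof (Cs2 N m t Ht Hm). specialize (HN N (le_n N)).
      replace (zs a Ps z0 n t - zs a Ps z0 m t) with ((zs a Ps z0 n t - zs a Ps z0 N t) - (zs a Ps z0 m t - zs a Ps z0 N t)) by ring.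
      eapply Rle_lt_trans. apply Rabs_triang. rewrite Rabs_Ropp. lra. }
    destruct E as [l Hl]. rewrite (is_lim_seq_unique _ _ Hl). simpl. auto. }
  assert (Bd : forall n t, 0 <= t -> Rabs (zl a Ps z0 t - zs a Ps z0 n t) <= 2 * K * (/2) ^ n * exp (2 * L * t)).
  { intros n t Ht. apply (lim_bound2 (fun k => zs a Ps z0 (k + n) t) (fun _ => zs a Ps z0 n t)).
    apply (is_lim_seq_incr_n (fun k => zs a Ps z0 k t) n). auto. apply is_lim_seq_const.
    intros k. apply Cs2; auto. lia. }
  assert (LipL : forall s t, Rabs (zl a Ps z0 t - zl a Ps z0 s) <= B * Rabs (t - s)).
  { intros s t. apply Rle_trans with (B * Rabs (Rmax 0 t - Rmax 0 s)).
    - unfold zl at 1 2.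
      pose proof (Lim (Rmax 0 t) (Rmax_l _ _)) as L1. pose proof (Lim (Rmax 0 s) (Rmax_l _ _)) as L2.
      unfold zl in L1, L2. rewrite (Rmax_right 0 (Rmax 0 t)) in L1 by apply Rmax_l.
      rewrite (Rmax_right 0 (Rmax 0 s)) in L2 by apply Rmax_l.
      eapply lim_bound2. exact L1. exact L2. intros; apply Lip.
    - apply Rmult_le_compat_l. unfold B; lra.
      unfold Rmax; repeat destruct Rle_dec; unfold Rabs; repeat destruct Rcase_abs; lra. }
  assert (Cl : forall x, continuous (zl a Ps z0) x) by (intros; apply lip_cont with B; auto).
  assert (ExL : forall u v, ex_RInt (fun s => a s + Ps (zl a Ps z0 s)) u v) by (intros; apply integ_ok; auto).
  assert (Eq : forall t, 0 <= t -> zl a Ps z0 t = z0 + RI (fun s => a s + Ps (zl a Ps z0 s)) 0 t).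
  { intros t Ht.
    assert (X0 : Rabs (zl a Ps z0 t - (z0 + RI (fun s => a s + Ps (zl a Ps z0 s)) 0 t)) = 0).
    { apply zero_of_small with (2 * K * exp (2 * L * t) + t * (L * (2 * K * exp (2 * L * t)))). apply Rabs_pos.
      intros n. 
      replace (zl a Ps z0 t - (z0 + RI (fun s => a s + Ps (zl a Ps z0 s)) 0 t)) with
        ((zl a Ps z0 t - zs a Ps z0 (S n) t) + (RI (fun s => a s + Ps (zs a Ps z0 n s)) 0 t - RI (fun s => a s + Ps (zl a Ps z0 s)) 0 t)) by (simpl; ring).
      eapply Rle_trans. apply Rabs_triang.
      pose proof (Bd (S n) t Ht) as B1. change ((/2)^(S n)) with (/2 * (/2)^n) in B1.
      pose proof (pow_le (/2) n ltac:(lra)). pose proof (exp_pos (2 * L * t)).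
      assert (B2 : Rabs (RI (fun s => a s + Ps (zs a Ps z0 n s)) 0 t - RI (fun s => a s + Ps (zl a Ps z0 s)) 0 t)
         <= t * (L * (2 * K * (/2) ^ n * exp (2 * L * t)))).
      { pose proof (is_RInt_minus _ _ 0 t _ _ (RInt_is _ _ _ (Ex n 0 t)) (RInt_is _ _ _ (ExL 0 t))) as Im.
        replace (t * (L * (2 * K * (/ 2) ^ n * exp (2 * L * t)))) with ((t - 0) * (L * (2 * K * (/ 2) ^ n * exp (2 * L * t)))) by ring.
        apply (norm_RInt_le_const _ 0 t _ _ Ht) with (2 := Im).
        intros x Hx. unfold minus, plus, opp; simpl.
        replace (a x + Ps (zs a Ps z0 n x) + - (a x + Ps (zl a Ps z0 x))) with (Ps (zs a Ps z0 n x) - Ps (zl a Ps z0 x)) by ring.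
        eapply Rle_trans. apply HL. apply Rmult_le_compat_l. lra. rewrite <- Rabs_Ropp.
        replace (- (zs a Ps z0 n x - zl a Ps z0 x)) with (zl a Ps z0 x - zs a Ps z0 n x) by ring.
        eapply Rle_trans. apply Bd. lra.
        apply Rmult_le_compat_l. apply Rmult_le_pos; [apply Rmult_le_pos; lra|lra].
        apply exp_le. nra. }
      assert (2 * K * ((/2) * (/2) ^ n) * exp (2 * L * t) <= 2 * K * exp (2 * L * t) * (/2) ^ n).
      { assert (0 <= 2 * K * exp (2 * L * t) * (/2)^n). apply Rmult_le_pos; try lra. apply Rmult_le_pos; lra. nra. }
      assert (t * (L * (2 * K * (/ 2) ^ n * exp (2 * L * t))) = t * (L * (2 * K * exp (2 * L * t))) * (/2)^n) by ring.
      lra. }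
    apply Rabs_eq_0 in X0. lra. }
  assert (Z0 : zl a Ps z0 0 = z0).
  { rewrite Eq by lra. unfold RI. rewrite RInt_point. unfold zero; simpl; ring. }
  split; auto. split; auto. intros t Ht. rewrite Z0, (Eq t Ht).
  replace (z0 + RI (fun s : R => a s + Ps (zl a Ps z0 s)) 0 t - z0) with (RI (fun s : R => a s + Ps (zl a Ps z0 s)) 0 t) by ring.
  apply RInt_is; auto.
Qed.

Definition ash (m x : R) := ln ((x + sqrt (x ^ 2 + m ^ 2)) / m).

Lemma Sq_prop m x : 0 < m -> sqrt (x ^ 2 + m ^ 2) * sqrt (x ^ 2 + m ^ 2) = x ^ 2 + m ^ 2 /\ 0 < sqrt (x ^ 2 + m ^ 2) /\ 0 < x + sqrt (x ^ 2 + m ^ 2).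
Proof.
  intros Hm. assert (0 < x ^ 2 + m ^ 2) by nra.
  pose proof (sqrt_sqrt _ (Rlt_le _ _ H)). pose proof (sqrt_lt_R0 _ H).
  split; auto. split; auto. nra.
Qed.

Lemma sh_ash m x : 0 < m -> m * sh (ash m x) = x.
Proof.
  intros Hm. destruct (Sq_prop m x Hm) as [E [P Q]]. set (S := sqrt (x ^ 2 + m ^ 2)) in *.
  unfold sh, ash. fold S. rewrite exp_Ropp, exp_ln. 2: apply Rdiv_lt_0_compat; auto.
  field_simplify. 2: split; lra.
  replace (- m ^ 2 + x ^ 2 + 2 * x * S + S ^ 2) with (x * (2 * x + 2 * S)) by (simpl; nra).
  field. lra.
Qed.

Lemma der_ash m x : 0 < m -> is_derive (ash m) x (/ sqrt (x ^ 2 + m ^ 2)).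
Proof.
  intros Hm. destruct (Sq_prop m x Hm) as [E [P Q]]. unfold ash. auto_derive.
  - split. nra. split; auto. apply Rdiv_lt_0_compat; auto.
  - replace (x * (x * 1) + m * (m * 1)) with (x ^ 2 + m ^ 2) by ring.
    set (S := sqrt (x ^ 2 + m ^ 2)) in *. field. lra.
Qed.

Lemma cont_ash m x : 0 < m -> continuous (ash m) x.
Proof. intros. apply cont_der. intros; eexists; apply der_ash; auto. Qed.

Lemma sqrt_msh m z : 0 < m -> sqrt (m ^ 2 + (m * sh z) ^ 2) = m * ch z.
Proof.
  intros Hm. replace (m ^ 2 + (m * sh z) ^ 2) with ((m * ch z) ^ 2).
  apply sqrt_pow2. pose proof (ch_ge1 z). nra.
  rewrite Rpow_mult_distr, ch_sq. ring.
Qed.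

Lemma pcf_plus f g : pcf f -> pcf g -> pcf (fun s => f s + g s).
Proof. intros Hf Hg a b. destruct (Hf a b) as [l1 H1]. destruct (Hg a b) as [l2 H2]. exists (l1 ++ l2). apply PC_plus; auto. Qed.
Lemma pcf_mult f g : pcf f -> pcf g -> pcf (fun s => f s * g s).
Proof. intros Hf Hg a b. destruct (Hf a b) as [l1 H1]. destruct (Hg a b) as [l2 H2]. exists (l1 ++ l2). apply PC_mult; auto. Qed.
Lemma pcf_cont f : (forall x, continuous f x) -> pcf f.
Proof.
  intros H a b. exists nil. intros p q H1 H2 H3 _. exists f. split; auto.
Qed.
Lemma pcf_ext f g : pcf f -> (forall x, f x = g x) -> pcf g.
Proof. intros H E a b. destruct (H a b) as [l Hl]. exists l. apply PC_ext with f; auto. Qed.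
Lemma pcf_ex_RInt f : pcf f -> forall u v, ex_RInt f u v.
Proof.
  intros H. assert (forall u v, u <= v -> ex_RInt f u v).
  { intros u v Huv. destruct (H u v) as [l Hl]. apply PC_ex_RInt with l; auto. }
  intros u v. destruct (Rle_dec u v). auto. apply ex_RInt_swap. apply H0. lra.
Qed.

Lemma pcf_scale f al : piecewise_C1 f -> 0 < al -> pcf (fun s => f (al * s)).
Proof.
  intros [S [LF HS]] Hal a b. destruct (LF (al * a) (al * b)) as [L HL].
  exists (map (fun y => y / al) L). intros p q Hp Hpq Hq Hy.
  destruct (HS (al * p) (al * q)) as [g [[Hg1 _] Hg2]].
  - apply Rmult_lt_compat_l; auto.
  - intros x Hx Sx. apply (Hy (x / al)). apply (in_map (fun y => y / al)). apply HL; auto.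
    split. apply Rle_trans with (al * p). apply Rmult_le_compat_l; lra. lra.
    apply Rle_trans with (al * q). lra. apply Rmult_le_compat_l; lra.
    split. apply Rmult_lt_reg_l with al; auto. replace (al * (x / al)) with x by (field; lra). lra.
    apply Rmult_lt_reg_l with al; auto. replace (al * (x / al)) with x by (field; lra). lra.
  - exists (fun s => g (al * s)). split.
    + intros x. apply continuous_comp with (f := fun s => al * s). apply cont_der. intros; auto_derive; auto.
      apply (ex_derive_continuous (K:=R_AbsRing) (V:=R_NormedModule)). apply Hg1.
    + intros x Hx. apply Hg2. split; apply Rmult_lt_compat_l; lra.
Qed.

Lemma pcf_pw f : piecewise_C1 f -> pcf f.
Proof. intros H. apply pcf_ext with (fun s => f (1 * s)). apply pcf_scale; auto; lra. intros; rewrite Rmult_1_l; auto. Qed.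

Lemma pcf_const k : pcf (fun _ => k).
Proof. apply pcf_cont. intros; apply continuous_const. Qed.

Definition NN (t : R) : nat := Z.to_nat (up (Rabs t)).

Lemma twopi_gt : 4 < 2 * PI.
Proof. pose proof PI2_1. lra. Qed.

Lemma NN_ge t : Rabs t <= INR (NN t).
Proof.
  unfold NN. destruct (archimed (Rabs t)) as [H1 _]. pose proof (Rabs_pos t).
  assert (0 <= up (Rabs t))%Z. { apply le_IZR. lra. }
  rewrite INR_IZR_INZ, Z2Nat.id by auto. lra.
Qed.

Lemma NN_prop t : 0 <= t + 2 * PI * INR (NN t).
Proof.
  pose proof (NN_ge t). pose proof twopi_gt. pose proof (pos_INR (NN t)).
  assert (- t <= Rabs t) by (rewrite <- Rabs_Ropp; apply Rle_abs). nra.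
Qed.

Lemma per_shift (f : R -> R) : (forall t, 0 <= t -> f (t + 2 * PI) = f t) ->
  forall n t, 0 <= t -> f (t + 2 * PI * INR n) = f t.
Proof.
  intros H n. induction n; intros t Ht. simpl. f_equal; ring.
  rewrite S_INR. replace (t + 2 * PI * (INR n + 1)) with ((t + 2 * PI * INR n) + 2 * PI) by ring.
  rewrite H. apply IHn; auto. pose proof (pos_INR n). pose proof PI_RGT_0. nra.
Qed.

Lemma per_shift_all (f : R -> R) : (forall t, f (t + 2 * PI) = f t) ->
  forall n t, f (t + 2 * PI * INR n) = f t.
Proof.
  intros H n. induction n; intros t. simpl. f_equal; ring.
  rewrite S_INR. replace (t + 2 * PI * (INR n + 1)) with ((t + 2 * PI * INR n) + 2 * PI) by ring.
  rewrite H. apply IHn.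
Qed.

Definition pext (f : R -> R) (t : R) := f (t + 2 * PI * INR (NN t)).

Lemma pext_eq f : (forall t, 0 <= t -> f (t + 2 * PI) = f t) ->
  forall t n, 0 <= t + 2 * PI * INR n -> pext f t = f (t + 2 * PI * INR n).
Proof.
  intros H t n Hn. unfold pext. pose proof (NN_prop t).
  destruct (le_lt_dec n (NN t)) as [L|L].
  - replace (t + 2 * PI * INR (NN t)) with ((t + 2 * PI * INR n) + 2 * PI * INR (NN t - n)).
    apply per_shift; auto. rewrite minus_INR by auto. ring.
  - replace (t + 2 * PI * INR n) with ((t + 2 * PI * INR (NN t)) + 2 * PI * INR (n - NN t)).
    symmetry. apply per_shift; auto. rewrite minus_INR by lia. ring.
Qed.

Lemma pext_pos f : (forall t, 0 <= t -> f (t + 2 * PI) = f t) -> forall t, 0 <= t -> pext f t = f t.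
Proof. intros H t Ht. rewrite (pext_eq f H t 0). simpl. f_equal; ring. simpl; lra. Qed.

Lemma pext_per f : (forall t, 0 <= t -> f (t + 2 * PI) = f t) -> forall t, pext f (t + 2 * PI) = pext f t.
Proof.
  intros H t. pose proof (NN_prop t). pose proof PI_RGT_0.
  rewrite (pext_eq f H (t + 2 * PI) (NN t)) by lra. unfold pext.
  replace (t + 2 * PI + 2 * PI * INR (NN t)) with ((t + 2 * PI * INR (NN t)) + 2 * PI) by ring.
  apply H; auto.
Qed.

Lemma pext_cont f : (forall t, 0 <= t -> f (t + 2 * PI) = f t) -> (forall x, continuous f x) ->
  forall x, continuous (pext f) x.
Proof.
  intros H Hc x. apply continuous_ext_loc with (fun s => f (s + 2 * PI * INR (S (NN x)))).
  - apply (filter_imp (fun s => x - 1 < s < x + 1)). 2: apply loc_in; lra.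
    intros s Hs. symmetry. apply pext_eq; auto. rewrite S_INR. pose proof (NN_prop x). pose proof twopi_gt. nra.
  - apply continuous_comp with (f := fun s => s + 2 * PI * INR (S (NN x))). apply cont_der. intros; auto_derive; auto.
    apply Hc.
Qed.

Lemma RI_shift (g : R -> R) u v : (forall t, g (t + 2 * PI) = g t) -> (forall a b, ex_RInt g a b) ->
  RI g (u + 2 * PI) (v + 2 * PI) = RI g u v.
Proof.
  intros Hp He. unfold RI. symmetry. apply is_RInt_unique.
  pose proof (is_RInt_comp_lin g 1 (2 * PI) u v (RInt g (1 * u + 2 * PI) (1 * v + 2 * PI))) as C.
  replace (1 * u + 2 * PI) with (u + 2 * PI) in C by ring. replace (1 * v + 2 * PI) with (v + 2 * PI) in C by ring.
  specialize (C (RInt_is g _ _ (He _ _))).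
  apply is_RInt_ext with (2 := C). intros x _. unfold scal; simpl; unfold mult; simpl.
  replace (1 * x + 2 * PI) with (x + 2 * PI) by ring. rewrite Hp. ring.
Qed.

Lemma RI_chasles (g : R -> R) a b c : (forall a b, ex_RInt g a b) -> RI g a b + RI g b c = RI g a c.
Proof. intros He. unfold RI. pose proof (RInt_Chasles (V:=R_CompleteNormedModule) g a b c (He _ _) (He _ _)) as E. exact E. Qed.

Lemma RI_point (g : R -> R) a : RI g a a = 0.
Proof. unfold RI. rewrite RInt_point. reflexivity. Qed.

Lemma PEXT (g F : R -> R) : (forall t, g (t + 2 * PI) = g t) -> (forall a b, ex_RInt g a b) ->
  (forall t, F (t + 2 * PI) = F t) -> (forall t, 0 <= t -> is_RInt g 0 t (F t - F 0)) ->
  forall t, is_RInt g 0 t (F t - F 0).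
Proof.
  intros Hg He HF HI.
  assert (R0 : forall t, 0 <= t -> RI g 0 t = F t - F 0) by (intros; apply is_RInt_unique; auto).
  assert (S1 : forall u, 0 <= u -> RI g u (u + 2 * PI) = 0).
  { intros u Hu. rewrite <- (RI_chasles g u 0 (u + 2 * PI)) by auto.
    rewrite R0. 2: pose proof PI_RGT_0; lra.
    replace (RI g u 0) with (- RI g 0 u). rewrite R0; auto. rewrite HF. ring.
    pose proof (RI_chasles g 0 u 0 He). rewrite RI_point in H. lra. }
  assert (S2 : forall n u, RI g u (u + 2 * PI) = RI g (u + 2 * PI * INR n) (u + 2 * PI * INR n + 2 * PI)).
  { induction n; intros u. simpl. rewrite Rmult_0_r, Rplus_0_r. auto.
    rewrite IHn, S_INR. rewrite <- RI_shift with (u := u + 2 * PI * INR n) (v := u + 2 * PI * INR n + 2 * PI); auto.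
    f_equal; ring. }
  assert (S3 : forall u, RI g u (u + 2 * PI) = 0).
  { intros u. rewrite (S2 (NN u)). apply S1. apply NN_prop. }
  assert (S4 : forall n u, RI g u (u + 2 * PI * INR n) = 0).
  { induction n; intros u. simpl. rewrite Rmult_0_r, Rplus_0_r. apply RI_point.
    rewrite S_INR, <- (RI_chasles g u (u + 2 * PI * INR n) (u + 2 * PI * (INR n + 1))) by auto.
    rewrite IHn. replace (u + 2 * PI * (INR n + 1)) with (u + 2 * PI * INR n + 2 * PI) by ring. rewrite S3. ring. }
  intros t. replace (F t - F 0) with (RI g 0 t).
  apply RInt_is; auto.
  pose proof (RI_chasles g 0 t (t + 2 * PI * INR (NN t)) He). rewrite S4 in H.
  rewrite (R0 (t + 2 * PI * INR (NN t))) in H by apply NN_prop. rewrite per_shift_all in H; auto. lra.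
Qed.

Lemma is_RInt_zero a b : is_RInt (fun _ : R => 0) a b 0.
Proof. pose proof (is_RInt_const (V:=R_NormedModule) a b 0) as C. change (is_RInt (fun _ : R => 0) a b ((b - a) * 0)) in C. rewrite Rmult_0_r in C. exact C. Qed.

Lemma STAB (a Ps : R -> R) (L : R) (z w : R -> R) :
  (forall x y, Rabs (Ps x - Ps y) <= L * Rabs (x - y)) ->
  (forall x, continuous z x) -> (forall x, continuous w x) ->
  (forall t, 0 <= t -> is_RInt (fun u => a u + Ps (z u)) 0 t (z t - z 0)) ->
  (forall t, 0 <= t -> is_RInt (fun u => a u + Ps (w u)) 0 t (w t - w 0)) ->
  forall T, 0 <= T -> (z T - w T) ^ 2 <= (z 0 - w 0) ^ 2 * exp (2 * L * T).
Proof.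
  intros HL Hz Hw Iz Iw T HT.
  assert (HPc : forall x, continuous Ps x) by (intros; apply lip_cont with L; auto).
  pose proof (GRON2 nil T L (fun s => z s - w s) (fun _ => 0) (fun s => Ps (z s) - Ps (w s)) (fun _ => 0)) as G.
  replace ((z T - w T) ^ 2) with ((z T - w T) ^ 2 + 0 ^ 2) by ring.
  replace ((z 0 - w 0) ^ 2) with ((z 0 - w 0) ^ 2 + 0 ^ 2) by ring.
  apply G; auto.
  - apply cw_cont; auto. intros. apply (continuous_minus z w); auto.
  - apply cw_const.
  - apply PC_cw. apply cw_cont; auto. intros. apply (continuous_minus (fun s => Ps (z s)) (fun s => Ps (w s))); apply continuous_comp; auto.
  - apply PC_cw. apply cw_const.
  - intros s Hs. pose proof (is_RInt_minus _ _ 0 s _ _ (Iz s ltac:(lra)) (Iw s ltac:(lra))) as M.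
    simpl. replace (z s - w s - (z 0 - w 0)) with (minus (z s - z 0) (w s - w 0)) by (unfold minus, plus, opp; simpl; ring).
    apply is_RInt_ext with (2 := M). intros x _. unfold minus, plus, opp; simpl. ring.
  - intros s Hs. simpl. replace (0 - 0) with 0 by ring. apply is_RInt_zero.
  - intros s Hs. pose proof (HL (z s) (w s)). pose proof (Rle_abs ((z s - w s) * (Ps (z s) - Ps (w s)))).
    rewrite Rabs_mult in H0. pose proof (Rabs_pos (z s - w s)).
    assert (Rabs (z s - w s) * Rabs (Ps (z s) - Ps (w s)) <= Rabs (z s - w s) * (L * Rabs (z s - w s))) by (apply Rmult_le_compat_l; auto).
    assert (Rabs (z s - w s) * Rabs (z s - w s) = (z s - w s) ^ 2). rewrite <- Rabs_mult, Rabs_pos_eq. ring. apply Rle_0_sqr.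
    cbv beta. assert (L * (Rabs (z s - w s) * Rabs (z s - w s)) = L * (z s - w s) ^ 2) by (rewrite H3; auto).
    lra.
Qed.

Lemma zl_neg a Ps z0 t : t <= 0 -> zl a Ps z0 t = zl a Ps z0 0.
Proof. intros. unfold zl. rewrite Rmax_left by lra. rewrite Rmax_left by lra. auto. Qed.

Lemma sq_abs_le x y c : 0 <= c -> x ^ 2 <= y ^ 2 * c ^ 2 -> Rabs x <= c * Rabs y.
Proof.
  intros Hc H. replace (c * Rabs y) with (Rabs (y * c)).
  apply Rsqr_le_abs_0. unfold Rsqr. simpl in H. nra.
  rewrite Rabs_mult, (Rabs_pos_eq c) by auto. ring.
Qed.

Lemma exp_sq x : exp (2 * x) = exp x ^ 2.
Proof. simpl. rewrite Rmult_1_r, <- exp_plus. f_equal; ring. Qed.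

Lemma pcf_diff r1 r2 k : pcf r1 -> pcf r2 -> pcf (fun s => k * (r1 s - r2 s)).
Proof.
  intros. apply pcf_ext with (fun s => k * (r1 s + (-1) * r2 s)). 2: intros; ring.
  apply pcf_mult. apply pcf_const. apply pcf_plus; auto. apply pcf_mult; auto. apply pcf_const.
Qed.

Lemma shift_sol (a Ps z : R -> R) : pcf a -> (forall x, continuous Ps x) -> (forall x, continuous z x) ->
  (forall t, a (t + 2 * PI) = a t) ->
  (forall t, 0 <= t -> is_RInt (fun u => a u + Ps (z u)) 0 t (z t - z 0)) ->
  forall t, 0 <= t -> is_RInt (fun u => a u + Ps (z (u + 2 * PI))) 0 t (z (t + 2 * PI) - z (0 + 2 * PI)).
Proof.
  intros Ha HP Hz Hper HI t Ht. pose proof PI_RGT_0.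
  assert (I1 : is_RInt (fun u => a u + Ps (z u)) (2 * PI) (t + 2 * PI) (z (t + 2 * PI) - z (0 + 2 * PI))).
  { replace (z (t + 2 * PI) - z (0 + 2 * PI)) with (plus (opp (z (2 * PI) - z 0)) (z (t + 2 * PI) - z 0)).
    2: { rewrite Rplus_0_l. unfold plus, opp; simpl; ring. }
    apply (is_RInt_Chasles (fun u => a u + Ps (z u)) (2 * PI) 0 (t + 2 * PI)).
    apply (is_RInt_swap (fun u => a u + Ps (z u)) (2 * PI) 0). apply HI; lra. apply HI; lra. }
  pose proof (is_RInt_comp_lin (fun u => a u + Ps (z u)) 1 (2 * PI) 0 t (z (t + 2 * PI) - z (0 + 2 * PI))) as C.
  replace (1 * 0 + 2 * PI) with (2 * PI) in C by ring. replace (1 * t + 2 * PI) with (t + 2 * PI) in C by ring.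
  specialize (C I1). apply is_RInt_ext with (2 := C). intros x _.
  unfold scal; simpl; unfold mult; simpl. replace (1 * x + 2 * PI) with (x + 2 * PI) by ring. rewrite Hper. ring.
Qed.

Lemma yper (r1 r2 : R -> R) (nu m M1 M2 : R) :
  periodic_2pi r1 -> periodic_2pi r2 -> (forall t, Rabs (r1 t) <= M1) -> (forall t, Rabs (r2 t) <= M2) ->
  piecewise_C1 r1 -> piecewise_C1 r2 -> 0 < nu -> 0 < m ->
  exists zst : R -> R, exists A : R,
    0 <= A /\ M1 + M2 <= m * A /\
    (forall x, continuous zst x) /\
    (forall t, Rabs (zst t) <= A) /\
    (forall t, 0 <= t -> zst (t + 2 * PI) = zst t) /\
    (forall t, 0 <= t -> is_RInt (fun s => / nu * (r1 s - r2 s) - / nu * m * sh (zst s)) 0 t (zst t - zst 0)).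
Proof.
  intros P1 P2 B1 B2 C1 C2 Hnu Hm.
  assert (M10 : 0 <= M1) by (eapply Rle_trans; [apply Rabs_pos|apply (B1 0)]).
  assert (M20 : 0 <= M2) by (eapply Rle_trans; [apply Rabs_pos|apply (B2 0)]).
  set (a := fun s => / nu * (r1 s - r2 s)).
  assert (Ha : pcf a) by (apply pcf_diff; apply pcf_pw; auto).
  assert (Hper : forall t, a (t + 2 * PI) = a t) by (intros; unfold a; rewrite P1, P2; auto).
  set (A := (M1 + M2) / m).
  assert (A0 : 0 <= A) by (unfold A; apply Rmult_le_pos; [lra| left; apply Rinv_0_lt_compat; lra]).
  assert (AM : M1 + M2 <= m * A) by (unfold A; right; field; lra).
  set (b := / nu * m). assert (b0 : 0 < b) by (unfold b; apply Rmult_lt_0_compat; auto; apply Rinv_0_lt_compat; auto).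
  set (Ca := / nu * (M1 + M2)).
  assert (HCa : forall t, Rabs (a t) <= Ca).
  { intros t. unfold a, Ca. rewrite Rabs_mult, Rabs_pos_eq by (left; apply Rinv_0_lt_compat; auto).
    apply Rmult_le_compat_l. left; apply Rinv_0_lt_compat; auto.
    eapply Rle_trans. apply Rabs_triang. rewrite Rabs_Ropp. pose proof (B1 t). pose proof (B2 t). lra. }
  assert (CaB : Ca <= b * sh A).
  { unfold Ca, b. rewrite Rmult_assoc. apply Rmult_le_compat_l. left; apply Rinv_0_lt_compat; auto.
    pose proof (sh_ge A A0). nra. }
  set (Ps := Psi b A). set (L := b * exp A).
  assert (L0 : 0 < L) by (unfold L; apply Rmult_lt_0_compat; auto; apply exp_pos).
  assert (HL : forall x y, Rabs (Ps x - Ps y) <= L * Rabs (x - y)) by (intros; apply Psi_lip; auto).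
  assert (HB : forall x, Rabs (Ps x) <= b * exp A) by (intros; apply Psi_bound; auto).
  assert (HPc : forall x, continuous Ps x) by (intros; apply Psi_cont; auto).
  set (sol := fun x => zl a Ps x).
  assert (Sol : forall x, (forall t, continuous (sol x) t) /\ sol x 0 = x /\
     forall t, 0 <= t -> is_RInt (fun u => a u + Ps (sol x u)) 0 t (sol x t - sol x 0)).
  { intros x. apply (picard_main a Ps Ca (b * exp A) L x); auto. }
  assert (Inv : forall x, Rabs x <= A -> forall t, 0 <= t -> Rabs (sol x t) <= A).
  { intros x Hx. destruct (Sol x) as [S1 [S2 S3]]. apply (INV a b A Ca (sol x)); auto. rewrite S2; auto. }
  set (T := 2 * PI). assert (T0 : 0 < T) by (unfold T; pose proof PI_RGT_0; lra).
  assert (Plip : forall x y, Rabs (sol x T - sol y T) <= exp (L * T) * Rabs (x - y)).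
  { intros x y. destruct (Sol x) as [Sx1 [Sx2 Sx3]]. destruct (Sol y) as [Sy1 [Sy2 Sy3]].
    pose proof (STAB a Ps L (sol x) (sol y) HL Sx1 Sy1 Sx3 Sy3 T (Rlt_le _ _ T0)) as St.
    rewrite Sx2, Sy2 in St. apply sq_abs_le. left; apply exp_pos.
    rewrite <- exp_sq. replace (2 * (L * T)) with (2 * L * T) by ring. auto. }
  set (Q := fun x => sol x T - x).
  assert (Qc : continuity Q).
  { intros x. apply continuity_pt_filterlim. apply lip_cont with (exp (L * T) + 1). intros s t. unfold Q.
    replace (sol s T - s - (sol t T - t)) with ((sol s T - sol t T) - (s - t)) by ring.
    eapply Rle_trans. apply Rabs_triang. rewrite Rabs_Ropp. pose proof (Plip s t). lra. }
  destruct (IVT_cor Q (- A) A Qc ltac:(lra)) as [ast [Hast Qast]].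
  { unfold Q. pose proof (Inv (- A) ltac:(rewrite Rabs_Ropp, Rabs_pos_eq; lra) T (Rlt_le _ _ T0)).
    pose proof (Inv A ltac:(rewrite Rabs_pos_eq; lra) T (Rlt_le _ _ T0)).
    assert (0 <= sol (- A) T - - A) by (unfold Rabs in H; destruct Rcase_abs in H; lra).
    assert (sol A T - A <= 0) by (unfold Rabs in H0; destruct Rcase_abs in H0; lra). nra. }
  destruct (Sol ast) as [Z1 [Z2 Z3]].
  assert (Zb : forall t, Rabs (sol ast t) <= A).
  { intros t. destruct (Rle_dec 0 t). apply Inv; auto. unfold Rabs; destruct Rcase_abs; lra.
    unfold sol. rewrite zl_neg by lra. fold (sol ast). rewrite Z2. unfold Rabs; destruct Rcase_abs; lra. }
  exists (sol ast), A. split; auto. split; auto. split; auto. split; auto. split.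
  - intros t Ht.
    assert (W1 : forall x, continuous (fun u => sol ast (u + 2 * PI)) x).
    { intros x. apply continuous_comp with (f := fun u => u + 2 * PI). apply cont_der; intros; auto_derive; auto. apply Z1. }
    pose proof (shift_sol a Ps (sol ast) Ha HPc Z1 Hper Z3) as Sh.
    assert (Sh' : forall t, 0 <= t -> is_RInt (fun u => a u + Ps (sol ast (u + 2 * PI))) 0 t
        (sol ast (t + 2 * PI) - sol ast (0 + 2 * PI))) by auto.
    pose proof (STAB a Ps L (fun u => sol ast (u + 2 * PI)) (sol ast) HL W1 Z1 Sh' Z3 t Ht) as St.
    simpl in St. rewrite Rplus_0_l in St. fold T in St. unfold Q in Qast.
    replace (sol ast T - sol ast 0) with 0 in St by (rewrite Z2; lra).
    assert ((sol ast (t + 2 * PI) - sol ast t) ^ 2 = 0). { pose proof (pow2_ge_0 (sol ast (t + 2 * PI) - sol ast t)). unfold T in St. simpl in St |- *. nra. }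
    simpl in H. rewrite Rmult_1_r in H. apply Rmult_integral in H. unfold T. destruct H; lra.
  - intros t Ht. apply is_RInt_ext with (2 := Z3 t Ht). intros x _. unfold a, Ps. rewrite Psi_in by auto. change (@eq R (/ nu * (r1 x - r2 x) + - b * sh (sol ast x)) (/ nu * (r1 x - r2 x) - b * sh (sol ast x))). ring.
Qed.

Lemma is_RInt_expk k c t : k <> 0 -> is_RInt (fun u => c * exp (k * u)) 0 t (c * (exp (k * t) - 1) / k).
Proof.
  intros Hk.
  replace (c * (exp (k * t) - 1) / k) with (minus (c * exp (k * t) / k) (c * exp (k * 0) / k)).
  2: { rewrite Rmult_0_r, exp_0. unfold minus, plus, opp; simpl. field. lra. }
  apply (is_RInt_derive (fun u => c * exp (k * u) / k)).
  - intros x _. auto_derive; auto. field. lra.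
  - intros x _. apply cont_der. intros; auto_derive; auto.
Qed.

Lemma RI_plus (f g : R -> R) a b : ex_RInt f a b -> ex_RInt g a b -> RI (fun x => f x + g x) a b = RI f a b + RI g a b.
Proof. intros. unfold RI. apply (RInt_plus (V:=R_CompleteNormedModule)); auto. Qed.

Lemma RI_scal (f : R -> R) a b k : ex_RInt f a b -> RI (fun x => k * f x) a b = k * RI f a b.
Proof. intros. unfold RI. apply (RInt_scal (V:=R_CompleteNormedModule)); auto. Qed.

Lemma RI_ext (f g : R -> R) a b : (forall x, Rmin a b < x < Rmax a b -> f x = g x) -> RI f a b = RI g a b.
Proof. intros. unfold RI. apply (RInt_ext (V:=R_CompleteNormedModule)); auto. Qed.

Lemma RI_lin (H : R -> R) nu t : 0 < nu -> (forall a b, ex_RInt H a b) ->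
  RI (fun s => H (nu * s)) 0 t = / nu * RI H 0 (nu * t).
Proof.
  intros Hnu He.
  pose proof (is_RInt_comp_lin H nu 0 0 t (RI H 0 (nu * t))) as C.
  replace (nu * 0 + 0) with 0 in C by ring. replace (nu * t + 0) with (nu * t) in C by ring.
  specialize (C (RInt_is _ _ _ (He _ _))).
  assert (C' : is_RInt (fun y => nu * H (nu * y)) 0 t (RI H 0 (nu * t))).
  { apply is_RInt_ext with (2 := C). intros x _. unfold scal; simpl; unfold mult; simpl.
    rewrite Rplus_0_r. auto. }
  assert (E : RI (fun y => nu * H (nu * y)) 0 t = RI H 0 (nu * t)) by (apply is_RInt_unique; auto).
  assert (Ex : ex_RInt (fun s => H (nu * s)) 0 t).
  { apply ex_RInt_ext with (fun y => / nu * (nu * H (nu * y))). intros x _. rewrite <- Rmult_assoc, Rinv_l by lra. apply Rmult_1_l.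
    apply (ex_RInt_scal (V:=R_NormedModule) (fun y => nu * H (nu * y)) 0 t (/ nu)). eexists. exact C'. }
  rewrite RI_scal in E by auto. rewrite <- E. field. lra.
Qed.

Lemma cR_ext (f g : R -> R) (x : R) : (forall y : R, f y = g y) -> continuous f x -> continuous g x.
Proof. intros H. apply continuous_ext. exact H. Qed.

Lemma der_exp_half (u z : R -> R) (s du dz : R) :
  is_derive u s du -> is_derive z s dz ->
  is_derive (fun s => exp ((u s + z s) / 2)) s (exp ((u s + z s) / 2) * ((du + dz) / 2)).
Proof. intros H1 H2. auto_derive. exd. fixd H1. fixd H2. unfold Rdiv. ring. Qed.

Lemma xsol (r1 r2 : R -> R) (nu mu M1 M2 A' : R) (zx x1 x2 : R -> R) :
  (forall t, Rabs (r1 t) <= M1) -> (forall t, Rabs (r2 t) <= M2) ->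
  piecewise_C1 r1 -> piecewise_C1 r2 -> 0 < nu -> 0 < mu ->
  (forall x, continuous zx x) -> (forall t, Rabs (zx t) <= A') ->
  zx 0 = ln (x1 0 / x2 0) ->
  (forall t, 0 <= t -> is_RInt (fun s => (r1 (nu * s) - r2 (nu * s)) - 2 * mu * sh (zx s)) 0 t (zx t - zx 0)) ->
  0 < x1 0 -> 0 < x2 0 -> is_solution r1 r2 nu mu x1 x2 ->
  forall t, 0 <= t -> ln (x1 t * x2 t) = ln (x1 0 * x2 0) + RI (fun s => r1 (nu * s) + r2 (nu * s) + 2 * mu * ch (zx s) - 2 * mu) 0 t.
Proof.
  intros B1 B2 C1 C2 Hnu Hmu Zc Zb Z0 Zi X10 X20 Hs T HT.
  assert (M10 : 0 <= M1) by (eapply Rle_trans; [apply Rabs_pos|apply (B1 0)]).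
  assert (M20 : 0 <= M2) by (eapply Rle_trans; [apply Rabs_pos|apply (B2 0)]).
  set (m := 2 * mu).
  set (q1 := fun s => r1 (nu * s)). set (q2 := fun s => r2 (nu * s)).
  assert (Q1 : pcf q1) by (apply pcf_scale; auto). assert (Q2 : pcf q2) by (apply pcf_scale; auto).
  set (hu := fun s => q1 s + q2 s + m * ch (zx s) - m).
  assert (Chz : forall x, continuous (fun s => m * ch (zx s)) x).
  { intros x. apply (continuous_mult (fun _ => m) (fun s => ch (zx s))). apply continuous_const.
    apply continuous_comp; auto. apply cont_ch. }
  assert (Shz : forall x, continuous (fun s => m * sh (zx s)) x).
  { intros x. apply (continuous_mult (fun _ => m) (fun s => sh (zx s))). apply continuous_const.
    apply continuous_comp; auto. apply cont_sh. }
  assert (Hhu : pcf hu).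
  { apply pcf_ext with (fun s => q1 s + q2 s + (m * ch (zx s) + - m)). 2: intros; unfold hu; ring.
    apply pcf_plus. apply pcf_plus; auto. apply pcf_cont. intros x.
    apply (continuous_plus (fun s => m * ch (zx s)) (fun _ => - m)); auto. apply continuous_const. }
  assert (Hex : forall a b, ex_RInt hu a b) by (apply pcf_ex_RInt; auto).
  set (u0 := ln (x1 0 * x2 0)).
  set (u := fun t => u0 + RI hu 0 t).
  assert (HuB : forall x, Rabs (hu x) <= M1 + M2 + m * exp A' + m).
  { intros x. unfold hu, q1, q2. pose proof (B1 (nu * x)). pose proof (B2 (nu * x)).
    pose proof (ch_le A' (zx x) (Zb x)). pose proof (ch_ge1 (zx x)). unfold m in *.
    unfold Rabs in *; repeat destruct Rcase_abs; nra. }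
  assert (Uc : forall x, continuous u x).
  { intros x. apply lip_cont with (M1 + M2 + m * exp A' + m). intros s t. unfold u.
    replace (u0 + RI hu 0 s - (u0 + RI hu 0 t)) with (RI hu 0 s - RI hu 0 t) by ring.
    apply RInt_diff_lip; auto. }
  assert (Ui : forall t, is_RInt hu 0 t (u t - u 0)).
  { intros t. unfold u. rewrite RI_point. replace (u0 + RI hu 0 t - (u0 + 0)) with (RI hu 0 t) by ring. apply RInt_is; auto. }
  set (X1 := fun t => exp ((u t + zx t) / 2)).
  set (X2 := fun t => exp ((u t + - zx t) / 2)).
  assert (X1c : forall x, continuous X1 x).
  { intros x. apply continuous_comp with (f := fun t => (u t + zx t) / 2). 2: apply cont_exp.
    apply (continuous_mult (fun t => u t + zx t) (fun _ => / 2)). apply (continuous_plus u zx); auto. apply continuous_const. }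
  assert (X2c : forall x, continuous X2 x).
  { intros x. apply continuous_comp with (f := fun t => (u t + - zx t) / 2). 2: apply cont_exp.
    apply (continuous_mult (fun t => u t + - zx t) (fun _ => / 2)). apply (continuous_plus u (fun t => - zx t)); auto.
    apply (continuous_opp zx); auto. apply continuous_const. }
  destruct (Q1 0 T) as [l1 L1]. destruct (Q2 0 T) as [l2 L2].
  set (l := l1 ++ l2).
  assert (L1' : PC l 0 T q1).
  { apply PC_mono with l1 0 T; auto; try lra. unfold l. intros y Hy. apply in_or_app. left; auto. }
  assert (L2' : PC l 0 T q2).
  { apply PC_mono with l2 0 T; auto; try lra. unfold l. intros y Hy. apply in_or_app. right; auto. }
  clearbody l.
  assert (Lhu : PC l 0 T hu).
  { apply PC_ext with (fun s => q1 s + q2 s + (m * ch (zx s) + - m)). 2: intros; unfold hu; ring.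
    apply PC_plus'. apply PC_plus'; auto. apply PC_mono with nil 0 T; try lra. 2: incl_tac. apply PC_cw.
    apply cw_cont; auto. intros. apply (continuous_plus (fun s => m * ch (zx s)) (fun _ => - m)); auto. apply continuous_const. }
  set (gz := fun s => (r1 (nu * s) - r2 (nu * s)) - 2 * mu * sh (zx s)).
  assert (Lgz : PC l 0 T gz).
  { apply PC_ext with (fun s => q1 s + ((-1) * q2 s + (- m * sh (zx s)))). 2: intros; unfold gz, q1, q2, m; ring.
    apply PC_plus'; auto. apply PC_plus'. apply PC_cwm; auto. apply cw_const.
    apply PC_mono with nil 0 T; try lra. 2: incl_tac. apply PC_cw. apply cw_cont; auto. intros.
    apply cR_ext with (fun s => (-1) * (m * sh (zx s))). intros; ring.
    apply (continuous_mult (fun _ => -1) (fun s => m * sh (zx s))); auto. apply continuous_const. }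
  assert (Du : forall s, 0 < s < T -> ~ In s l -> is_derive u s (hu s)).
  { intros s Hs1 Hn. apply (DER l 0 T hu u s); auto. }
  assert (Dz : forall s, 0 < s < T -> ~ In s l -> is_derive zx s (gz s)).
  { intros s Hs1 Hn. apply (DER l 0 T gz zx s); auto. intros; apply Zi; lra. }
  set (g1 := fun s => r1 (nu * s) * x1 s + mu * (x2 s - x1 s)).
  set (g2 := fun s => r2 (nu * s) * x2 s + mu * (x1 s - x2 s)).
  set (G1 := fun s => r1 (nu * s) * X1 s + mu * (X2 s - X1 s)).
  set (G2 := fun s => r2 (nu * s) * X2 s + mu * (X1 s - X2 s)).
  assert (EX : forall s, X2 s = X1 s * exp (- zx s)).
  { intros s. unfold X1, X2. rewrite <- exp_plus. f_equal. field. }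
  assert (IX1 : forall s, 0 <= s <= T -> is_RInt G1 0 s (X1 s - X1 0)).
  { intros s Hs0. apply (INT l 0 s X1 G1); try lra.
    - apply cw_cont; auto. lra.
    - apply PC_mono with l 0 T; try lra. 2: incl_tac. unfold G1.
      apply PC_plus'. apply PC_mult'; auto. apply PC_mono with nil 0 T; try lra. 2: incl_tac. apply PC_cw. apply cw_cont; auto.
      apply PC_mono with nil 0 T; try lra. 2: incl_tac. apply PC_cw. apply cw_cont; auto.
      intros. apply (continuous_mult (fun _ => mu) (fun s => X2 s - X1 s)). apply continuous_const.
      apply (continuous_minus X2 X1); auto.
    - intros t Ht Hn. pose proof (der_exp_half u zx t _ _ (Du t ltac:(lra) Hn) (Dz t ltac:(lra) Hn)) as d.
      replace (G1 t) with (exp ((u t + zx t) / 2) * ((hu t + gz t) / 2)). exact d.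
      unfold G1. rewrite EX. unfold X1, hu, gz, q1, q2, m.
      replace (2 * mu * ch (zx t) - 2 * mu - 2 * mu * sh (zx t)) with (2 * mu * (ch (zx t) - sh (zx t)) - 2 * mu) by ring.
      replace (r1 (nu * t) + r2 (nu * t) + 2 * mu * ch (zx t) - 2 * mu + (r1 (nu * t) - r2 (nu * t) - 2 * mu * sh (zx t)))
        with (2 * r1 (nu * t) + 2 * mu * (ch (zx t) - sh (zx t)) - 2 * mu) by ring.
      rewrite ch_minus_sh. field. }
  assert (IX2 : forall s, 0 <= s <= T -> is_RInt G2 0 s (X2 s - X2 0)).
  { intros s Hs0. apply (INT l 0 s X2 G2); try lra.
    - apply cw_cont; auto. lra.
    - apply PC_mono with l 0 T; try lra. 2: incl_tac. unfold G2.
      apply PC_plus'. apply PC_mult'; auto. apply PC_mono with nil 0 T; try lra. 2: incl_tac. apply PC_cw. apply cw_cont; auto.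
      apply PC_mono with nil 0 T; try lra. 2: incl_tac. apply PC_cw. apply cw_cont; auto.
      intros. apply (continuous_mult (fun _ => mu) (fun s => X1 s - X2 s)). apply continuous_const.
      apply (continuous_minus X1 X2); auto.
    - intros t Ht Hn.
      assert (dz' : is_derive (fun s => - zx s) t (- gz t)).
      { pose proof (Dz t ltac:(lra) Hn) as d. auto_derive. exd. fixd d. ring. }
      pose proof (der_exp_half u (fun s => - zx s) t _ _ (Du t ltac:(lra) Hn) dz') as d.
      replace (G2 t) with (exp ((u t + - zx t) / 2) * ((hu t + - gz t) / 2)). exact d.
      unfold G2. assert (E1 : X1 t = X2 t * exp (zx t)).
      { rewrite EX, Rmult_assoc, <- exp_plus. replace (- zx t + zx t) with 0 by ring. rewrite exp_0. ring. }
      rewrite E1. unfold X2, hu, gz, q1, q2, m.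
      replace (r1 (nu * t) + r2 (nu * t) + 2 * mu * ch (zx t) - 2 * mu + - (r1 (nu * t) - r2 (nu * t) - 2 * mu * sh (zx t)))
        with (2 * r2 (nu * t) + 2 * mu * (ch (zx t) + sh (zx t)) - 2 * mu) by ring.
      rewrite ch_plus_sh. field. }
  destruct (Hs T HT) as [IT1 IT2].
  destruct (RInt_bound 0 T g1 (ex_intro _ _ IT1)) as [N1 HN1].
  destruct (RInt_bound 0 T g2 (ex_intro _ _ IT2)) as [N2 HN2].
  rewrite Rmin_left, Rmax_right in HN1, HN2 by lra.
  assert (Cx1 : cw 0 T x1) by (apply cw_of_RInt with g1 N1; auto; intros; apply Hs; lra).
  assert (Cx2 : cw 0 T x2) by (apply cw_of_RInt with g2 N2; auto; intros; apply Hs; lra).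
  assert (X1_0 : X1 0 = x1 0).
  { unfold X1, u. rewrite RI_point, Rplus_0_r, Z0. unfold u0. rewrite ln_mult, ln_div by auto.
    replace ((ln (x1 0) + ln (x2 0) + (ln (x1 0) - ln (x2 0))) / 2) with (ln (x1 0)) by field. apply exp_ln; auto. }
  assert (X2_0 : X2 0 = x2 0).
  { unfold X2, u. rewrite RI_point, Rplus_0_r, Z0. unfold u0. rewrite ln_mult, ln_div by auto.
    replace ((ln (x1 0) + ln (x2 0) + - (ln (x1 0) - ln (x2 0))) / 2) with (ln (x2 0)) by field. apply exp_ln; auto. }
  pose proof (GRON2 l T (M1 + M2) (fun s => x1 s - X1 s) (fun s => x2 s - X2 s)
     (fun s => q1 s * (x1 s - X1 s) + mu * ((x2 s - X2 s) - (x1 s - X1 s)))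
     (fun s => q2 s * (x2 s - X2 s) + mu * ((x1 s - X1 s) - (x2 s - X2 s)))) as G.
  assert (CD1 : cw 0 T (fun s => x1 s - X1 s)).
  { apply cw_ext with (fun s => x1 s + (-1) * X1 s). 2: intros; ring. apply cw_plus; auto. apply cw_mult. apply cw_const. apply cw_cont; auto. }
  assert (CD2 : cw 0 T (fun s => x2 s - X2 s)).
  { apply cw_ext with (fun s => x2 s + (-1) * X2 s). 2: intros; ring. apply cw_plus; auto. apply cw_mult. apply cw_const. apply cw_cont; auto. }
  assert (Z : (x1 T - X1 T) ^ 2 + (x2 T - X2 T) ^ 2 <= 0).
  { eapply Rle_trans. apply G; auto.
    - apply PC_plus'. apply PC_mult'; auto. apply PC_mono with nil 0 T; try lra. 2: incl_tac. apply PC_cw; auto.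
      apply PC_mono with nil 0 T; try lra. 2: incl_tac. apply PC_cw. apply cw_mult. apply cw_const.
      apply cw_ext with (fun s => (x2 s - X2 s) + (-1) * (x1 s - X1 s)). 2: intros; ring. apply cw_plus; auto. apply cw_mult; auto; apply cw_const.
    - apply PC_plus'. apply PC_mult'; auto. apply PC_mono with nil 0 T; try lra. 2: incl_tac. apply PC_cw; auto.
      apply PC_mono with nil 0 T; try lra. 2: incl_tac. apply PC_cw. apply cw_mult. apply cw_const.
      apply cw_ext with (fun s => (x1 s - X1 s) + (-1) * (x2 s - X2 s)). 2: intros; ring. apply cw_plus; auto. apply cw_mult; auto; apply cw_const.
    - intros s Hs0. destruct (Hs s ltac:(lra)) as [I1 _].
      pose proof (is_RInt_minus _ _ 0 s _ _ I1 (IX1 s Hs0)) as M.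
      replace ((x1 s - X1 s) - (x1 0 - X1 0)) with (minus (x1 s - x1 0) (X1 s - X1 0)) by (unfold minus, plus, opp; simpl; ring).
      apply is_RInt_ext with (2 := M). intros x _. unfold minus, plus, opp; simpl. unfold G1, q1. ring.
    - intros s Hs0. destruct (Hs s ltac:(lra)) as [_ I2].
      pose proof (is_RInt_minus _ _ 0 s _ _ I2 (IX2 s Hs0)) as M.
      replace ((x2 s - X2 s) - (x2 0 - X2 0)) with (minus (x2 s - x2 0) (X2 s - X2 0)) by (unfold minus, plus, opp; simpl; ring).
      apply is_RInt_ext with (2 := M). intros x _. unfold minus, plus, opp; simpl. unfold G2, q2. ring.
    - intros s _. set (d1 := x1 s - X1 s). set (d2 := x2 s - X2 s).
      pose proof (Rle_abs (q1 s)). pose proof (Rle_abs (q2 s)). pose proof (B1 (nu * s)). pose proof (B2 (nu * s)).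
      fold (q1 s) in H1. fold (q2 s) in H2.
      pose proof (pow2_ge_0 d1). pose proof (pow2_ge_0 d2). pose proof (pow2_ge_0 (d1 - d2)).
      assert (q1 s * d1 ^ 2 <= M1 * d1 ^ 2) by (apply Rmult_le_compat_r; lra).
      assert (q2 s * d2 ^ 2 <= M2 * d2 ^ 2) by (apply Rmult_le_compat_r; lra).
      assert (M1 * d2 ^ 2 >= 0) by nra. assert (M2 * d1 ^ 2 >= 0) by nra.
      assert (mu * (d1 - d2) ^ 2 >= 0) by nra.
      simpl in *. nra.
    - rewrite X1_0, X2_0. replace (x1 0 - x1 0) with 0 by ring. replace (x2 0 - x2 0) with 0 by ring.
      simpl. rewrite !Rmult_0_l, Rplus_0_l. right; ring. }
  assert (E1 : x1 T = X1 T) by (pose proof (pow2_ge_0 (x1 T - X1 T)); pose proof (pow2_ge_0 (x2 T - X2 T)); simpl in *; nra).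
  assert (E2 : x2 T = X2 T) by (pose proof (pow2_ge_0 (x1 T - X1 T)); pose proof (pow2_ge_0 (x2 T - X2 T)); simpl in *; nra).
  rewrite E1, E2. unfold X1, X2. rewrite <- exp_plus, ln_exp. unfold u, hu, q1, q2, m, u0. field.
Qed.

Lemma ex_lin (H : R -> R) nu t : 0 < nu -> (forall a b, ex_RInt H a b) -> ex_RInt (fun s => H (nu * s)) 0 t.
Proof.
  intros Hnu He.
  pose proof (is_RInt_comp_lin H nu 0 0 t (RI H 0 (nu * t))) as C.
  replace (nu * 0 + 0) with 0 in C by ring. replace (nu * t + 0) with (nu * t) in C by ring.
  specialize (C (RInt_is _ _ _ (He _ _))).
  assert (C' : is_RInt (fun y => nu * H (nu * y)) 0 t (RI H 0 (nu * t))).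
  { apply is_RInt_ext with (2 := C). intros x _. unfold scal; simpl; unfold mult; simpl.
    rewrite Rplus_0_r. auto. }
  apply ex_RInt_ext with (fun y => / nu * (nu * H (nu * y))). intros x _. rewrite <- Rmult_assoc, Rinv_l by lra. apply Rmult_1_l.
  apply (ex_RInt_scal (V:=R_NormedModule) (fun y => nu * H (nu * y)) 0 t (/ nu)). eexists. exact C'.
Qed.

Lemma limpart (r1 r2 : R -> R) (nu mu M1 M2 A : R) (zp x1 x2 : R -> R) :
  (forall t, Rabs (r1 t) <= M1) -> (forall t, Rabs (r2 t) <= M2) ->
  piecewise_C1 r1 -> piecewise_C1 r2 -> periodic_2pi r1 -> periodic_2pi r2 -> 0 < nu -> 0 < mu ->
  0 <= A -> M1 + M2 <= 2 * mu * A ->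
  (forall x, continuous zp x) -> (forall t, Rabs (zp t) <= A) -> (forall t, zp (t + 2 * PI) = zp t) ->
  (forall t, 0 <= t -> is_RInt (fun s => / nu * (r1 s - r2 s) - / nu * (2 * mu) * sh (zp s)) 0 t (zp t - zp 0)) ->
  0 < x1 0 -> 0 < x2 0 -> is_solution r1 r2 nu mu x1 x2 ->
  is_lim (fun t => ln (x1 t * x2 t) / t) p_infty
    (RI (fun s => r1 s + r2 s + 2 * mu * ch (zp s) - 2 * mu) 0 (2 * PI) / (2 * PI)).
Proof.
  intros B1 B2 C1 C2 P1 P2 Hnu Hmu A0 AM Zc Zb Zper Zi X10 X20 Hs.
  assert (M10 : 0 <= M1) by (eapply Rle_trans; [apply Rabs_pos|apply (B1 0)]).
  assert (M20 : 0 <= M2) by (eapply Rle_trans; [apply Rabs_pos|apply (B2 0)]).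
  set (m := 2 * mu). assert (Hm : 0 < m) by (unfold m; lra).
  set (z0 := ln (x1 0 / x2 0)). set (A' := Rmax A (Rabs z0)).
  assert (AA : A <= A') by apply Rmax_l. assert (Az : Rabs z0 <= A') by apply Rmax_r.
  set (c := fun s => r1 (nu * s) - r2 (nu * s)).
  assert (Hc : pcf c).
  { apply pcf_ext with (fun s => 1 * (r1 (nu * s) - r2 (nu * s))). 2: intros; unfold c; ring.
    apply pcf_diff; apply pcf_scale; auto. }
  assert (Hcb : forall t, Rabs (c t) <= M1 + M2).
  { intros t. unfold c. eapply Rle_trans. apply Rabs_triang. rewrite Rabs_Ropp. pose proof (B1 (nu * t)). pose proof (B2 (nu * t)). lra. }
  set (Ps := Psi m A'). set (L := m * exp A').
  assert (L0 : 0 < L) by (unfold L; apply Rmult_lt_0_compat; auto; apply exp_pos).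
  assert (A'0 : 0 <= A') by lra.
  destruct (picard_main c Ps (M1 + M2) (m * exp A') L z0 Hc Hcb) as [Zxc [Zx0 Zxi]].
  { intros; apply Psi_bound; auto. } { intros; apply Psi_lip; auto. } { auto. }
  set (zx := zl c Ps z0) in *.
  assert (CaB : M1 + M2 <= m * sh A').
  { pose proof (sh_ge A' A'0). unfold m in *. nra. }
  assert (Zxb : forall t, Rabs (zx t) <= A').
  { intros t. destruct (Rle_dec 0 t).
    - apply (INV c m A' (M1 + M2) zx); auto. rewrite Zx0; auto.
    - unfold zx. rewrite zl_neg by lra. fold zx. rewrite Zx0; auto. }
  assert (Zxi' : forall t, 0 <= t -> is_RInt (fun s => (r1 (nu * s) - r2 (nu * s)) - 2 * mu * sh (zx s)) 0 t (zx t - zx 0)).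
  { intros t Ht. apply is_RInt_ext with (2 := Zxi t Ht). intros x _. unfold c, Ps. rewrite Psi_in by auto. unfold m.
    change (@eq R (r1 (nu * x) - r2 (nu * x) + - (2 * mu) * sh (zx x)) (r1 (nu * x) - r2 (nu * x) - 2 * mu * sh (zx x))). ring. }
  pose proof (xsol r1 r2 nu mu M1 M2 A' zx x1 x2 B1 B2 C1 C2 Hnu Hmu Zxc Zxb Zx0 Zxi' X10 X20 Hs) as XS.
  set (u0 := ln (x1 0 * x2 0)) in XS.
  set (hu := fun s => r1 (nu * s) + r2 (nu * s) + 2 * mu * ch (zx s) - 2 * mu) in XS.
  set (H := fun s => r1 s + r2 s + 2 * mu * ch (zp s) - 2 * mu).
  assert (HH : pcf H).
  { apply pcf_ext with (fun s => r1 s + r2 s + (2 * mu * ch (zp s) + - (2 * mu))). 2: intros; unfold H; ring.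
    apply pcf_plus. apply pcf_plus; apply pcf_pw; auto. apply pcf_cont. intros x.
    apply (continuous_plus (fun s => 2 * mu * ch (zp s)) (fun _ => - (2 * mu))). 2: apply continuous_const.
    apply (continuous_mult (fun _ => 2 * mu) (fun s => ch (zp s))). apply continuous_const. apply continuous_comp; auto. apply cont_ch. }
  assert (HEx : forall a b, ex_RInt H a b) by (apply pcf_ex_RInt; auto).
  assert (Hper : forall t, H (t + 2 * PI) = H t) by (intros; unfold H; rewrite P1, P2, Zper; auto).
  set (MH := M1 + M2 + m * exp A + m).
  assert (HB : forall x, Rabs (H x) <= MH).
  { intros x. unfold H, MH. pose proof (B1 x). pose proof (B2 x).
    pose proof (ch_le A (zp x) (Zb x)). pose proof (ch_ge1 (zp x)). unfold m in *.
    unfold Rabs in *; repeat destruct Rcase_abs; nra. }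
  set (I := RI H 0 (2 * PI)). fold I.
  set (J := fun s => RI H 0 s).
  assert (Jp : forall s, J (s + 2 * PI) = J s + I).
  { intros s. unfold J, I. rewrite <- (RI_chasles H 0 (2 * PI) (s + 2 * PI)) by auto.
    replace (2 * PI) with (0 + 2 * PI) at 2 by ring. rewrite RI_shift by auto. ring. }
  assert (Jb : forall s, Rabs (J s) <= MH * Rabs s).
  { intros s. unfold J. replace (RI H 0 s) with (RI H 0 s - RI H 0 0) by (rewrite RI_point; ring).
    replace s with (s - 0) at 2 by ring. apply RInt_diff_lip; auto. }
  set (Q := fun s => J s - I / (2 * PI) * s).
  assert (PI0 : 0 < PI) by apply PI_RGT_0.
  assert (Qp : forall s, Q (s + 2 * PI) = Q s) by (intros; unfold Q; rewrite Jp; field; lra).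
  set (BQ := MH * (2 * PI) + Rabs I).
  assert (MH0 : 0 <= MH) by (eapply Rle_trans; [apply Rabs_pos|apply (HB 0)]).
  assert (Qb0 : forall s, 0 <= s <= 2 * PI -> Rabs (Q s) <= BQ).
  { intros s Hs0. unfold Q, BQ. eapply Rle_trans. apply Rabs_triang. rewrite Rabs_Ropp.
    pose proof (Jb s) as Jbs. rewrite (Rabs_pos_eq s) in Jbs by lra.
    assert (Rabs (I / (2 * PI) * s) <= Rabs I).
    { rewrite Rabs_mult, (Rabs_pos_eq s) by lra. unfold Rdiv. rewrite Rabs_mult, (Rabs_pos_eq (/ (2 * PI))).
      2: left; apply Rinv_0_lt_compat; lra.
      apply Rle_trans with (Rabs I * / (2 * PI) * (2 * PI)). apply Rmult_le_compat_l.
      apply Rmult_le_pos. apply Rabs_pos. left; apply Rinv_0_lt_compat; lra. lra. right; field; lra. }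
    nra. }
  assert (Qbn : forall n s, 0 <= s <= 2 * PI * INR n -> Rabs (Q s) <= BQ).
  { induction n; intros s Hs0.
    - simpl in Hs0. apply Qb0. lra.
    - destruct (Rle_dec s (2 * PI)). apply Qb0; lra.
      replace s with ((s - 2 * PI) + 2 * PI) by ring. rewrite Qp. apply IHn. rewrite S_INR in Hs0. lra. }
  assert (Qb : forall s, 0 <= s -> Rabs (Q s) <= BQ).
  { intros s Hs0. apply (Qbn (NN s)). split; auto. pose proof (NN_ge s) as Ns. rewrite Rabs_pos_eq in Ns by lra.
    pose proof twopi_gt. pose proof (pos_INR (NN s)). nra. }
  set (zq := fun s => zp (nu * s)).
  assert (Zqi : forall t, 0 <= t -> is_RInt (fun s => c s - m * sh (zq s)) 0 t (zq t - zq 0)).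
  { intros t Ht. pose proof (is_RInt_comp_lin (fun s => / nu * (r1 s - r2 s) - / nu * (2 * mu) * sh (zp s)) nu 0 0 t (zp (nu * t) - zp 0)) as C.
    replace (nu * 0 + 0) with 0 in C by ring. replace (nu * t + 0) with (nu * t) in C by ring.
    specialize (C (Zi (nu * t) ltac:(nra))). unfold zq. rewrite Rmult_0_r.
    apply is_RInt_ext with (2 := C). intros x _. unfold scal; simpl; unfold mult; simpl. rewrite Rplus_0_r.
    unfold c, m. field. lra. }
  assert (Zqc : forall x, continuous zq x).
  { intros x. apply continuous_comp with (f := fun s => nu * s). apply cont_der; intros; auto_derive; auto. apply Zc. }
  assert (Dxb : forall T, 0 <= T -> Rabs (zx T - zq T) <= exp (- m * T) * Rabs (zx 0 - zq 0)).
  { intros T HT.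
    pose proof (GRON2 nil T (- m) (fun s => zx s - zq s) (fun _ => 0) (fun s => - m * (sh (zx s) - sh (zq s))) (fun _ => 0)) as G.
    assert (G' : (zx T - zq T) ^ 2 + 0 ^ 2 <= ((zx 0 - zq 0) ^ 2 + 0 ^ 2) * exp (2 * - m * T)).
    { apply G; auto.
      - apply cw_cont; auto. intros; apply (continuous_minus zx zq); auto.
      - apply cw_const.
      - apply PC_cw. apply cw_cont; auto. intros. apply (continuous_mult (fun _ => - m) (fun s => sh (zx s) - sh (zq s))).
        apply continuous_const. apply (continuous_minus (fun s => sh (zx s)) (fun s => sh (zq s))); apply continuous_comp; auto; apply cont_sh.
      - apply PC_cw. apply cw_const.
      - intros s Hs0. pose proof (is_RInt_minus _ _ 0 s _ _ (Zxi' s ltac:(lra)) (Zqi s ltac:(lra))) as M.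
        simpl. replace (zx s - zq s - (zx 0 - zq 0)) with (minus (zx s - zx 0) (zq s - zq 0)) by (unfold minus, plus, opp; simpl; ring).
        apply is_RInt_ext with (2 := M). intros x _. unfold minus, plus, opp; simpl. unfold c, m. ring.
      - intros s Hs0. simpl. replace (0 - 0) with 0 by ring. apply is_RInt_zero.
      - intros s _. pose proof (sh_mono (zx s) (zq s)). simpl in *. nra. }
    apply sq_abs_le. left; apply exp_pos. rewrite <- exp_sq. simpl in G' |- *.
    replace (2 * (- m * T)) with (2 * - m * T) by ring. nra. }
  set (E := fun s => 2 * mu * (ch (zx s) - ch (zq s))).
  assert (EEx : forall a b, ex_RInt E a b).
  { apply pcf_ex_RInt. apply pcf_cont. intros x. apply (continuous_mult (fun _ => 2 * mu) (fun s => ch (zx s) - ch (zq s))).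
    apply continuous_const. apply (continuous_minus (fun s => ch (zx s)) (fun s => ch (zq s))); apply continuous_comp; auto; apply cont_ch. }
  set (BE := exp A' * Rabs (zx 0 - zq 0)).
  assert (Eb : forall t, 0 <= t -> Rabs (RI E 0 t) <= BE).
  { intros t Ht.
    pose proof (is_RInt_expk (- m) (m * exp A' * Rabs (zx 0 - zq 0)) t ltac:(lra)) as Ie.
    eapply Rle_trans. apply (norm_RInt_le E _ 0 t _ _ Ht) with (2 := RInt_is _ _ _ (EEx 0 t)) (3 := Ie).
    - intros x Hx. change (Rabs (E x) <= m * exp A' * Rabs (zx 0 - zq 0) * exp (- m * x)). unfold E.
      rewrite Rabs_mult, (Rabs_pos_eq (2 * mu)) by lra. fold m.
      eapply Rle_trans. apply Rmult_le_compat_l. lra. apply ch_lip. apply Zxb. unfold zq. pose proof (Zb (nu * x)). lra.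
      pose proof (Dxb x ltac:(lra)). pose proof (exp_pos A'). pose proof (exp_pos (- m * x)).
      assert (exp A' * Rabs (zx x - zq x) <= exp A' * (exp (- m * x) * Rabs (zx 0 - zq 0))) by (apply Rmult_le_compat_l; lra).
      nra.
    - pose proof (exp_pos (- m * t)). pose proof (exp_le (- m * t) 0 ltac:(nra)) as El. rewrite exp_0 in El.
      unfold BE. pose proof (Rabs_pos (zx 0 - zq 0)). pose proof (exp_pos A').
      replace (m * exp A' * Rabs (zx 0 - zq 0) * (exp (- m * t) - 1) / - m) with (exp A' * Rabs (zx 0 - zq 0) * (1 - exp (- m * t))) by (field; lra).
      assert (0 <= exp A' * Rabs (zx 0 - zq 0)) by (apply Rmult_le_pos; lra). nra. }
  assert (Lt : forall t, 0 < t -> ln (x1 t * x2 t) / t - I / (2 * PI) = (u0 + / nu * Q (nu * t) + RI E 0 t) / t).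
  { intros t Ht. rewrite XS by lra.
    assert (E1 : RI hu 0 t = RI (fun s => H (nu * s)) 0 t + RI E 0 t).
    { rewrite <- RI_plus. apply RI_ext. intros x _. unfold hu, H, E, zq. ring.
      apply ex_lin; auto. auto. }
    rewrite E1, RI_lin by auto. fold (J (nu * t)). unfold Q. field. split; lra. }
  apply is_lim_spec. intros eps. set (Bn := Rabs u0 + / nu * BQ + BE).
  assert (Bn0 : 0 <= Bn).
  { unfold Bn, BE, BQ. pose proof (Rabs_pos u0). pose proof (Rabs_pos I). pose proof (Rabs_pos (zx 0 - zq 0)). pose proof (exp_pos A').
    assert (0 <= / nu) by (left; apply Rinv_0_lt_compat; auto). pose proof PI_RGT_0.
    assert (0 <= MH * (2 * PI)) by nra. assert (0 <= exp A' * Rabs (zx 0 - zq 0)) by nra. nra. }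
  exists (Bn / eps + 1). intros t Ht. pose proof (cond_pos eps).
  assert (Tp : 0 < t). { assert (0 <= Bn / eps) by (apply Rmult_le_pos; auto; left; apply Rinv_0_lt_compat; auto). lra. }
  rewrite Lt by auto. unfold Rdiv. rewrite Rabs_mult, (Rabs_pos_eq (/ t)) by (left; apply Rinv_0_lt_compat; auto).
  assert (Num : Rabs (u0 + / nu * Q (nu * t) + RI E 0 t) <= Bn).
  { unfold Bn. eapply Rle_trans. apply Rabs_triang. eapply Rle_trans. apply Rplus_le_compat_r. apply Rabs_triang.
    rewrite Rabs_mult, (Rabs_pos_eq (/ nu)) by (left; apply Rinv_0_lt_compat; auto).
    pose proof (Qb (nu * t) ltac:(nra)). pose proof (Eb t ltac:(lra)).
    assert (/ nu * Rabs (Q (nu * t)) <= / nu * BQ) by (apply Rmult_le_compat_l; auto; left; apply Rinv_0_lt_compat; auto).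
    lra. }
  apply Rle_lt_trans with (Bn * / t). apply Rmult_le_compat_r. left; apply Rinv_0_lt_compat; auto. auto.
  apply Rmult_lt_reg_r with t; auto. rewrite Rmult_assoc, Rinv_l, Rmult_1_r by lra.
  assert (Bn < eps * t).
  { assert (Bt : Bn / eps < t) by lra. apply Rmult_lt_reg_r with (/ eps). apply Rinv_0_lt_compat; auto.
    replace (eps * t * / eps) with t by (field; lra). exact Bt. }
  lra.
Qed.

Lemma der_msh (m : R) (z : R -> R) (s dz : R) : is_derive z s dz -> is_derive (fun s => m * sh (z s)) s (m * ch (z s) * dz).
Proof. intros H. unfold sh, ch. auto_derive. exd. fixd H. field. Qed.

Lemma cont_sqm m x : 0 < m -> continuous (fun x => sqrt (m ^ 2 + x ^ 2)) x.
Proof. intros. apply cont_der. intros y. auto_derive. nra. Qed.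

Theorem mainTheorem4 (r1 r2 : R -> R) (nu mu : R) :
  periodic_2pi r1 -> periodic_2pi r2 ->
  bounded_fun r1 -> bounded_fun r2 ->
  piecewise_C1 r1 -> piecewise_C1 r2 ->
  0 < nu -> 0 < mu ->
  let m := 2 * mu in
  exists y : R -> R,
    (periodic_2pi y /\ is_y_solution r1 r2 nu m y) /\
    (forall z : R -> R, periodic_2pi z -> is_y_solution r1 r2 nu m z ->
        forall t, z t = y t) /\
    exists I : R,
      is_RInt (fun s => r1 s + r2 s + sqrt (m ^ 2 + y s ^ 2) - m) 0 (2 * PI) I /\
      forall x1 x2 : R -> R,
        0 < x1 0 -> 0 < x2 0 -> is_solution r1 r2 nu mu x1 x2 ->
        is_lim (fun t => ln (x1 t * x2 t) / t) p_infty (I / (2 * PI)).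
Proof.
  intros P1 P2 [M1 B1] [M2 B2] C1 C2 Hnu Hmu m.
  assert (Hm : 0 < m) by (unfold m; lra).
  destruct (yper r1 r2 nu m M1 M2 P1 P2 B1 B2 C1 C2 Hnu Hm) as [zst [A [A0 [AM [Zc [Zb [Zp Zi]]]]]]].
  set (zp := pext zst).
  assert (Zpc : forall x, continuous zp x) by (apply pext_cont; auto).
  assert (Zpb : forall t, Rabs (zp t) <= A) by (intros; unfold zp, pext; auto).
  assert (Zpper : forall t, zp (t + 2 * PI) = zp t) by (apply pext_per; auto).
  assert (Zppos : forall t, 0 <= t -> zp t = zst t) by (apply pext_pos; auto).
  assert (Zpi : forall t, 0 <= t -> is_RInt (fun s => / nu * (r1 s - r2 s) - / nu * m * sh (zp s)) 0 t (zp t - zp 0)).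
  { intros t Ht. rewrite !Zppos by lra. apply is_RInt_ext with (2 := Zi t Ht).
    intros x Hx. rewrite Zppos; auto. rewrite Rmin_left in Hx by lra. lra. }
  assert (PI0 : 0 < PI) by apply PI_RGT_0.
  set (y := fun t => m * sh (zp t)).
  assert (Yper : forall t, y (t + 2 * PI) = y t) by (intros; unfold y; rewrite Zpper; auto).
  assert (Yc : forall x, continuous y x).
  { intros x. apply (continuous_mult (fun _ => m) (fun s => sh (zp s))). apply continuous_const.
    apply continuous_comp; auto. apply cont_sh. }
  set (d := fun s => r1 s - r2 s).
  assert (Hd : pcf d) by (apply pcf_ext with (fun s => 1 * (r1 s - r2 s)); [apply pcf_diff; apply pcf_pw; auto | intros; unfold d; ring]).
  set (kn := / nu). assert (kn0 : 0 < kn) by (unfold kn; apply Rinv_0_lt_compat; auto).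
  exists y. split; [split|split].
  - intros t. apply Yper.
  - intros t. set (g := fun s => / nu * sqrt (m ^ 2 + y s ^ 2) * (r1 s - r2 s - y s)).
    assert (Kc : forall x, continuous (fun s => / nu * sqrt (m ^ 2 + y s ^ 2)) x).
    { intros x. apply (continuous_mult (fun _ => / nu) (fun s => sqrt (m ^ 2 + y s ^ 2))). apply continuous_const.
      apply continuous_comp with (g := fun x => sqrt (m ^ 2 + x ^ 2)); auto. apply cont_sqm; auto. }
    assert (Gpcf : pcf g).
    { apply pcf_ext with (fun s => (/ nu * sqrt (m ^ 2 + y s ^ 2)) * (d s + (-1) * y s)). 2: intros; unfold g, d; ring.
      apply pcf_mult. apply pcf_cont; auto. apply pcf_plus; auto. apply pcf_cont. intros x.
      apply (continuous_mult (fun _ => -1) y); auto. apply continuous_const. }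
    apply (PEXT g y); auto.
    + intros s. unfold g. rewrite P1, P2, Yper. auto.
    + apply pcf_ex_RInt; auto.
    + intros T HT. destruct (Hd 0 T) as [l Hl].
      set (gz := fun s => / nu * (r1 s - r2 s) - / nu * m * sh (zp s)).
      assert (Lgz : PC l 0 T gz).
      { apply PC_ext with (fun s => (- (/ nu) * m * sh (zp s)) + / nu * d s). 2: intros; unfold gz, d; ring.
        apply PC_cwp. apply cw_cont; auto. intros. apply (continuous_mult (fun _ => - (/ nu) * m) (fun s => sh (zp s))).
        apply continuous_const. apply continuous_comp; auto; apply cont_sh.
        apply PC_cwm; auto. apply cw_const. }
      apply (INT l 0 T y g); auto.
      * apply cw_cont; auto.
      * apply PC_ext with (fun s => (/ nu * sqrt (m ^ 2 + y s ^ 2)) * ((-1) * y s + d s)). 2: intros; unfold g, d; ring.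
        apply PC_cwm. apply cw_cont; auto. apply PC_cwp; auto. apply cw_cont; auto. intros.
        apply (continuous_mult (fun _ => -1) y); auto. apply continuous_const.
      * intros s Hs Hn. pose proof (DER l 0 T gz zp s ltac:(intros; apply Zpi; lra) Lgz Hs Hn) as dz.
        pose proof (der_msh m zp s _ dz) as dy.
        replace (g s) with (m * ch (zp s) * gz s). exact dy.
        unfold g, gz, y. rewrite sqrt_msh by auto. ring.
  - intros w Pw Iw.
    set (W := fun s => ash m (w s)).
    set (h := fun s => / nu * (r1 s - r2 s) - / nu * m * sh (W s)).
    set (gw := fun s => / nu * sqrt (m ^ 2 + w s ^ 2) * (r1 s - r2 s - w s)).
    assert (CwT : forall T, 0 <= T -> cw 0 T w).
    { intros T HT. destruct (RInt_bound 0 T gw (ex_intro _ _ (Iw T))) as [N HN].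
      rewrite Rmin_left, Rmax_right in HN by lra. apply cw_of_RInt with gw N; auto. }
    assert (CWT : forall T, 0 <= T -> cw 0 T W).
    { intros T HT. apply (cw_comp 0 T w (ash m)); auto. intros; apply cont_ash; auto. }
    assert (IW : forall T, 0 <= T -> is_RInt h 0 T (W T - W 0)).
    { intros T HT. destruct (Hd 0 T) as [l Hl].
      assert (Lgw : PC l 0 T gw).
      { apply PC_ext with (fun s => (/ nu * sqrt (m ^ 2 + w s ^ 2)) * ((-1) * w s + d s)). 2: intros; unfold gw, d; ring.
        apply PC_cwm. apply cw_ext with (fun s => / nu * sqrt (m ^ 2 + w s ^ 2)). 2: auto.
        apply cw_mult. apply cw_const. apply cw_comp with (phi := fun x => sqrt (m ^ 2 + x ^ 2)); auto. intros; apply cont_sqm; auto.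
        apply PC_cwp; auto. apply cw_mult. apply cw_const. auto. }
      apply (INT l 0 T W h); auto.
      + apply PC_ext with (fun s => (- (/ nu) * m * sh (W s)) + / nu * d s). 2: intros; unfold h, d; ring.
        apply PC_cwp. apply cw_mult. apply cw_const. apply cw_comp; auto. apply cont_sh.
        apply PC_cwm; auto. apply cw_const.
      + intros s Hs Hn. pose proof (DER l 0 T gw w s ltac:(intros; apply Iw) Lgw Hs Hn) as dw.
        pose proof (is_derive_comp (ash m) w s _ _ (der_ash m (w s) Hm) dw) as dW.
        replace (h s) with (scal (gw s) (/ sqrt (w s ^ 2 + m ^ 2))). exact dW.
        unfold scal; simpl; unfold mult; simpl. unfold h, gw, W.
        replace (/ nu * m * sh (ash m (w s))) with (/ nu * (m * sh (ash m (w s)))) by ring. rewrite sh_ash by auto.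
        rewrite (Rplus_comm (m ^ 2)). destruct (Sq_prop m (w s) Hm) as [_ [Sp _]].
        replace (w s * (w s * 1) + m * (m * 1)) with (w s ^ 2 + m ^ 2) by ring. field; repeat split; lra. }
    assert (GD : forall T, 0 <= T -> (W T - zp T) ^ 2 <= (W 0 - zp 0) ^ 2 * exp (2 * - (kn * m) * T)).
    { intros T HT.
      pose proof (GRON2 nil T (- (kn * m)) (fun s => W s - zp s) (fun _ => 0) (fun s => - (kn * m) * (sh (W s) - sh (zp s))) (fun _ => 0)) as G.
      assert (G' : (W T - zp T) ^ 2 + 0 ^ 2 <= ((W 0 - zp 0) ^ 2 + 0 ^ 2) * exp (2 * - (kn * m) * T)).
      { apply G; auto.
        - apply cw_ext with (fun s => W s + (-1) * zp s). 2: intros; ring. apply cw_plus; auto. apply cw_mult. apply cw_const. apply cw_cont; auto.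
        - apply cw_const.
        - apply PC_cw. apply cw_mult. apply cw_const. apply cw_ext with (fun s => sh (W s) + (-1) * sh (zp s)). 2: intros; ring.
          apply cw_plus. apply cw_comp; auto; apply cont_sh. apply cw_mult. apply cw_const. apply cw_cont; auto.
          intros; apply continuous_comp; auto; apply cont_sh.
        - apply PC_cw. apply cw_const.
        - intros s Hs0. pose proof (is_RInt_minus _ _ 0 s _ _ (IW s ltac:(lra)) (Zpi s ltac:(lra))) as M.
          simpl. replace (W s - zp s - (W 0 - zp 0)) with (minus (W s - W 0) (zp s - zp 0)) by (unfold minus, plus, opp; simpl; ring).
          apply is_RInt_ext with (2 := M). intros x _. unfold minus, plus, opp; simpl. unfold h, kn. ring.
        - intros s Hs0. simpl. replace (0 - 0) with 0 by ring. apply is_RInt_zero.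
        - intros s _. pose proof (sh_mono (W s) (zp s)). assert (0 < kn * m) by (apply Rmult_lt_0_compat; auto).
          simpl in *. nra. }
      simpl in G' |- *. nra. }
    assert (W2 : W (2 * PI) = W 0) by (unfold W; replace (2 * PI) with (0 + 2 * PI) by ring; rewrite Pw; auto).
    assert (Z2 : zp (2 * PI) = zp 0) by (replace (2 * PI) with (0 + 2 * PI) by ring; rewrite Zpper; auto).
    assert (D0 : W 0 - zp 0 = 0).
    { pose proof (GD (2 * PI) ltac:(lra)) as G2. rewrite W2, Z2 in G2.
      set (e := exp (2 * - (kn * m) * (2 * PI))) in G2.
      assert (e < 1). { unfold e. rewrite <- exp_0. apply exp_increasing.
        assert (0 < kn * m) by (apply Rmult_lt_0_compat; auto). nra. }
      pose proof (exp_pos (2 * - (kn * m) * (2 * PI))). fold e in H0.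
      pose proof (pow2_ge_0 (W 0 - zp 0)).
      assert ((W 0 - zp 0) ^ 2 = 0) by nra. simpl in H2. rewrite Rmult_1_r in H2. apply Rmult_integral in H2. destruct H2; auto. }
    assert (Pos : forall T, 0 <= T -> w T = y T).
    { intros T HT. pose proof (GD T HT). rewrite D0 in H. simpl in H. rewrite Rmult_0_l, Rmult_0_l in H.
      pose proof (pow2_ge_0 (W T - zp T)). simpl in H0.
      assert (W T = zp T) by nra. unfold y. rewrite <- H1. unfold W. rewrite sh_ash; auto. }
    intros t. rewrite <- (per_shift_all w Pw (NN t) t), <- (per_shift_all y Yper (NN t) t). apply Pos. apply NN_prop.
  - set (Hs := fun s => r1 s + r2 s + sqrt (m ^ 2 + y s ^ 2) - m).
    assert (EH : forall s, Hs s = r1 s + r2 s + 2 * mu * ch (zp s) - 2 * mu).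
    { intros s. unfold Hs, y. rewrite sqrt_msh by auto. unfold m. ring. }
    exists (RI Hs 0 (2 * PI)). split.
    + apply RInt_is. apply ex_RInt_ext with (fun s => r1 s + r2 s + 2 * mu * ch (zp s) - 2 * mu).
      intros x _. rewrite EH. auto.
      apply pcf_ex_RInt. apply pcf_ext with (fun s => r1 s + r2 s + (2 * mu * ch (zp s) + - (2 * mu))). 2: intros; ring.
      apply pcf_plus. apply pcf_plus; apply pcf_pw; auto. apply pcf_cont. intros x.
      apply (continuous_plus (fun s => 2 * mu * ch (zp s)) (fun _ => - (2 * mu))). 2: apply continuous_const.
      apply (continuous_mult (fun _ => 2 * mu) (fun s => ch (zp s))). apply continuous_const. apply continuous_comp; auto. apply cont_ch.
    + intros x1 x2 X1 X2 Hsol.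
      replace (RI Hs 0 (2 * PI)) with (RI (fun s => r1 s + r2 s + 2 * mu * ch (zp s) - 2 * mu) 0 (2 * PI)).
      apply (limpart r1 r2 nu mu M1 M2 A zp x1 x2); auto.
      apply RI_ext. intros; rewrite EH; auto.
Qed.
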